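(* Let $p\geq3$, $\lambda=\lambda_p=2\cos(\pi/p)$, and for real $x$ define $\rho(x)=TS^{-r(x)}(x)=\frac{1}{r(x)\lambda-x}$ where $r(x)=\lfloor x/\lambda\rfloor+1$. Then: (i) for every hyperbolic fixed point $\alpha$ of $G_p$ there is $n\ge0$ such that $\rho^n(\alpha)$ is $G_p$-reduced; (ii) $\rho$ maps $G_p$-reduced numbers to $G_p$-reduced numbers, and every $G_p$-reduced $\beta$ satisfies $\rho^m(\beta)=\beta$ for some $m\ge1$, so the reduced numbers fall into disjoint $\rho$-cycles; (iii) if $\beta,\gamma$ are $G_p$-reduced and $\gamma=V\beta$ for some $V\in G_p$, then $\gamma=\rho^n(\beta)$ for some $n\ge0$. Consequently each $G_p$-equivalence class of hyperbolic fixed points contains exactly one cycle of $G_p$-reduced numbers.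
   Context: Let $S=\begin{pmatrix}1&\lambda\\0&1\end{pmatrix}$, $T=\begin{pmatrix}0&-1\\1&0\end{pmatrix}$, and $G_p=\langle S,T\rangle/\{\pm I\}$ acting on $\mathbb{R}\cup\{\infty\}$ by linear fractional transformations. A hyperbolic fixed point is a real number fixed by an element of $G_p$ with $|{\rm trace}|>2$; two such points $\alpha,\beta$ are $G_p$-equivalent if $\beta=V\alpha$ for some $V\in G_p$. The $\lambda$-continued fraction of a real $\alpha$: $\alpha_0=\alpha$, $r_j=\lfloor\alpha_j/\lambda\rfloor+1$, $\alpha_{j+1}=\frac{1}{r_j\lambda-\alpha_j}$, so $\alpha=r_0\lambda-\cfrac{1}{r_1\lambda-\cfrac{1}{r_2\lambda-\cdots}}$. A real number is $G_p$-reduced if its $\lambda$-continued fraction is purely periodic with period other than $(2,1,\dots,1)$ with $p-3$ ones. *)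

(* Defs.v *)
From Stdlib Require Import Reals Lra.
Open Scope R_scope.

Definition lam (p : nat) : R := 2 * cos (PI / INR p).

Record mat2 := Mat2 { ma : R; mb : R; mc : R; md : R }.

Definition mmul (M N : mat2) : mat2 :=
  Mat2 (ma M * ma N + mb M * mc N) (ma M * mb N + mb M * md N)
       (mc M * ma N + md M * mc N) (mc M * mb N + md M * md N).

Definition mid : mat2 := Mat2 1 0 0 1.
Definition Smat (p : nat) : mat2 := Mat2 1 (lam p) 0 1.
Definition Sinv (p : nat) : mat2 := Mat2 1 (- lam p) 0 1.
Definition Tmat : mat2 := Mat2 0 (-1) 1 0.
Definition Tinv : mat2 := Mat2 0 1 (-1) 0.

(* G_p is the image of this
   group modulo {+-I}; since M and -M act identically and have traces of equal
   absolute value, we work with matrix representatives. *)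
Inductive inGp (p : nat) : mat2 -> Prop :=
  | Gp_id : inGp p mid
  | Gp_S M : inGp p M -> inGp p (mmul (Smat p) M)
  | Gp_Sinv M : inGp p M -> inGp p (mmul (Sinv p) M)
  | Gp_T M : inGp p M -> inGp p (mmul Tmat M)
  | Gp_Tinv M : inGp p M -> inGp p (mmul Tinv M).

Definition trace (M : mat2) : R := ma M + md M.

Definition maps_to (M : mat2) (x y : R) : Prop :=
  mc M * x + md M <> 0 /\ y = (ma M * x + mb M) / (mc M * x + md M).

Definition hyperbolic_fixed_point (p : nat) (a : R) : Prop :=
  exists M, inGp p M /\ Rabs (trace M) > 2 /\ maps_to M a a.

Definition Gp_equiv (p : nat) (a b : R) : Prop :=
  exists V, inGp p V /\ maps_to V a b.

(* floor via Stdlib's Int_part (Int_part x = up x - 1 = floor x) *)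
Definition rdigit (p : nat) (x : R) : Z := (Int_part (x / lam p) + 1)%Z.

Definition rho (p : nat) (x : R) : R := 1 / (IZR (rdigit p x) * lam p - x).

Fixpoint rho_iter (p : nat) (n : nat) (x : R) : R :=
  match n with O => x | S k => rho p (rho_iter p k x) end.

Definition cf_digit (p : nat) (x : R) (j : nat) : Z := rdigit p (rho_iter p j x).

Definition purely_periodic (p : nat) (x : R) : Prop :=
  exists k : nat, (1 <= k)%nat /\ forall j, cf_digit p x (j + k) = cf_digit p x j.

Definition special_period (p : nat) (x : R) : Prop :=
  exists c : nat, (c < p - 2)%nat /\
    forall j, cf_digit p x j = (if Nat.eqb (j mod (p - 2)) c then 2 else 1)%Z.

Definition Gp_reduced (p : nat) (x : R) : Prop :=
  purely_periodic p x /\ ~ special_period p x.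

(* Main.v *)
Require Import Defs.
From Stdlib Require Import Reals Lra Lia ZArith Arith Classical.
Open Scope R_scope.

Section Lam.
Variable p : nat.
Hypothesis hp : (3 <= p)%nat.

Definition th := PI / INR p.

Lemma INR_p_ge3 : 3 <= INR p.
Proof. replace 3 with (INR 3) by (simpl; lra). apply le_INR; lia. Qed.

Lemma th_pos : 0 < th.
Proof. unfold th. apply Rdiv_lt_0_compat. apply PI_RGT_0. pose proof INR_p_ge3; lra. Qed.

Lemma th_le : th <= PI / 3.
Proof. unfold th. pose proof INR_p_ge3. pose proof PI_RGT_0.
  apply Rmult_le_compat_l. lra. apply Rinv_le_contravar; lra. Qed.

Lemma lam_ge1 : 1 <= lam p.
Proof.
  unfold lam. fold th. pose proof th_pos. pose proof th_le. pose proof PI_RGT_0.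
  assert (cos (PI/3) <= cos th). { apply cos_decr_1; lra. }
  rewrite cos_PI3 in H2. lra.
Qed.

Lemma lam_lt2 : lam p < 2.
Proof.
  unfold lam. fold th. pose proof th_pos. pose proof th_le. pose proof PI_RGT_0.
  assert (cos th < cos 0). { apply cos_decreasing_1; lra. }
  rewrite cos_0 in H2. lra.
Qed.

Lemma lam_pos : 0 < lam p.
Proof. pose proof lam_ge1; lra. Qed.

Fixpoint sq (n : nat) : R :=
  match n with
  | O => 0
  | S O => 1
  | S ((S m) as k) => lam p * sq k - sq m
  end.

Lemma sq_rec n : sq (S (S n)) = lam p * sq (S n) - sq n.
Proof. reflexivity. Qed.

Lemma sq_sin n : sq n * sin th = sin (INR n * th).
Proof.
  induction n as [n IH] using (well_founded_induction lt_wf).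
  destruct n as [|[|n]].
  - simpl sq. simpl INR. rewrite !Rmult_0_l, sin_0. ring.
  - simpl sq. simpl INR. rewrite !Rmult_1_l. reflexivity.
  - rewrite sq_rec. 
    assert (H1 := IH (S n) ltac:(lia)). assert (H2 := IH n ltac:(lia)).
    replace ((lam p * sq (S n) - sq n) * sin th) with (lam p * (sq (S n) * sin th) - sq n * sin th) by ring.
    rewrite H1, H2. unfold lam. fold th.
    rewrite !S_INR.
    replace ((INR n + 1 + 1) * th) with ((INR n + 1) * th + th) by ring.
    replace (INR n * th) with ((INR n + 1) * th - th) by ring.
    rewrite sin_plus, sin_minus. ring.
Qed.

Lemma sin_th_pos : 0 < sin th.
Proof. apply sin_gt_0. apply th_pos. pose proof th_le; pose proof PI_RGT_0; lra. Qed.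

Lemma INR_p_th : INR p * th = PI.
Proof. unfold th. field. pose proof INR_p_ge3; lra. Qed.

Lemma sq_p : sq p = 0.
Proof.
  pose proof (sq_sin p). rewrite INR_p_th, sin_PI in H.
  pose proof sin_th_pos. apply Rmult_integral in H. destruct H; [auto|lra].
Qed.

Lemma sq_pm1 : sq (p - 1) = 1.
Proof.
  pose proof (sq_sin (p-1)). rewrite minus_INR in H by lia. simpl INR in H.
  replace ((INR p - 1) * th) with (PI - th) in H by (rewrite <- INR_p_th; ring).
  rewrite sin_PI_x in H. pose proof sin_th_pos.
  apply (Rmult_eq_reg_r (sin th)); lra.
Qed.

Lemma sq_pos j : (1 <= j <= p - 1)%nat -> 0 < sq j.
Proof.
  intros Hj. pose proof (sq_sin j). pose proof sin_th_pos.
  assert (0 < sin (INR j * th)).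
  { apply sin_gt_0. apply Rmult_lt_0_compat. apply lt_0_INR; lia. apply th_pos.
    rewrite <- INR_p_th. apply Rmult_lt_compat_r. apply th_pos. apply lt_INR; lia. }
  rewrite <- H in H1. 
  destruct (Rlt_le_dec 0 (sq j)); auto.
  nra.
Qed.

Lemma sq_cassini n : sq (S n) * sq (S n) - sq n * sq (S (S n)) = 1.
Proof.
  induction n. simpl. ring.
  rewrite (sq_rec (S n)). rewrite sq_rec in IHn.
  rewrite sq_rec. nra.
Qed.

Lemma sq_pm2 : sq (p - 2) = lam p.
Proof.
  pose proof sq_p. pose proof sq_pm1.
  replace p with (S (S (p-2))) in H at 1 by lia. rewrite sq_rec in H.
  replace (S (p-2)) with (p-1)%nat in H by lia. rewrite H0 in H. lra.
Qed.

Lemma sq_pm3 : sq (p - 3) = lam p * lam p - 1.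
Proof.
  pose proof sq_pm1. pose proof sq_pm2.
  replace (p-1)%nat with (S (S (p-3))) in H by lia. rewrite sq_rec in H.
  replace (S (p-3)) with (p-2)%nat in H by lia. rewrite H0 in H. lra.
Qed.

End Lam.

Definition mdet (M : mat2) : R := ma M * md M - mb M * mc M.
Definition mscale (k : R) (M : mat2) : mat2 := Mat2 (k * ma M) (k * mb M) (k * mc M) (k * md M).
Definition madj (M : mat2) : mat2 := Mat2 (md M) (- mb M) (- mc M) (ma M).

Ltac mat_ring := repeat match goal with M : mat2 |- _ => destruct M end;
  unfold mmul, mscale, madj, mid, Smat, Sinv, Tmat, Tinv in *; simpl in *; f_equal; ring.

Lemma mmul_assoc A B C : mmul A (mmul B C) = mmul (mmul A B) C.
Proof. mat_ring. Qed.
Lemma mmul_id_l A : mmul mid A = A.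
Proof. mat_ring. Qed.
Lemma mmul_id_r A : mmul A mid = A.
Proof. mat_ring. Qed.
Lemma mdet_mul A B : mdet (mmul A B) = mdet A * mdet B.
Proof. destruct A, B; unfold mdet, mmul; simpl; ring. Qed.
Lemma mmul_scale_l k A B : mmul (mscale k A) B = mscale k (mmul A B).
Proof. mat_ring. Qed.
Lemma mmul_scale_r k A B : mmul A (mscale k B) = mscale k (mmul A B).
Proof. mat_ring. Qed.
Lemma mscale_scale k l A : mscale k (mscale l A) = mscale (k * l) A.
Proof. mat_ring. Qed.
Lemma mscale_1 A : mscale 1 A = A.
Proof. mat_ring. Qed.
Lemma madj_l A : mmul (madj A) A = mscale (mdet A) mid.
Proof. unfold mdet. mat_ring. Qed.
Lemma madj_r A : mmul A (madj A) = mscale (mdet A) mid.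
Proof. unfold mdet. mat_ring. Qed.

Definition pt := option R.
Definition vec (x : pt) : R * R := match x with Some y => (y, 1) | None => (1, 0) end.
Definition mv (M : mat2) (w : R * R) : R * R :=
  (ma M * fst w + mb M * snd w, mc M * fst w + md M * snd w).
Definition nrm (w : R * R) : pt :=
  if Req_EM_T (snd w) 0 then None else Some (fst w / snd w).
Definition act (M : mat2) (x : pt) : pt := nrm (mv M (vec x)).

Definition nz (w : R * R) := fst w <> 0 \/ snd w <> 0.

Lemma vec_nz x : nz (vec x).
Proof. destruct x; unfold nz; simpl; lra. Qed.

Lemma vec_nrm w : nz w -> exists k, k <> 0 /\ vec (nrm w) = (k * fst w, k * snd w).
Proof.
  destruct w as [u v]; unfold nz, nrm; simpl; intros H.
  destruct (Req_EM_T v 0).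
  - subst. exists (/ u). destruct H; [|lra]. split. apply Rinv_neq_0_compat; auto.
    simpl. f_equal; field; auto.
  - exists (/ v). split. apply Rinv_neq_0_compat; auto. simpl. f_equal; field; auto.
Qed.

Lemma nrm_scale k w : k <> 0 -> nrm (k * fst w, k * snd w) = nrm w.
Proof.
  destruct w as [u v]; unfold nrm; simpl; intros Hk.
  destruct (Req_EM_T (k * v) 0), (Req_EM_T v 0); auto.
  - exfalso. apply Rmult_integral in e. destruct e; auto.
  - subst. exfalso. apply n. ring.
  - f_equal. field. auto.
Qed.

Lemma mv_scale M k w : mv M (k * fst w, k * snd w) = (k * fst (mv M w), k * snd (mv M w)).
Proof. destruct w; unfold mv; simpl; f_equal; ring. Qed.

Lemma mv_mul A B w : mv (mmul A B) w = mv A (mv B w).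
Proof. destruct w, A, B; unfold mv, mmul; simpl; f_equal; ring. Qed.

Lemma mv_nz M w : mdet M <> 0 -> nz w -> nz (mv M w).
Proof.
  destruct w as [u v], M as [a b c d]; unfold nz, mv, mdet; simpl. intros Hd H.
  destruct (Req_EM_T (a*u+b*v) 0); [|left; auto].
  destruct (Req_EM_T (c*u+d*v) 0); [|right; auto].
  exfalso. destruct H as [H|H].
  - apply H. apply (Rmult_eq_reg_l (a*d-b*c)); auto.
    replace ((a*d-b*c)*u) with (d*(a*u+b*v) - b*(c*u+d*v)) by ring. rewrite e, e0. ring.
  - apply H. apply (Rmult_eq_reg_l (a*d-b*c)); auto.
    replace ((a*d-b*c)*v) with (a*(c*u+d*v) - c*(a*u+b*v)) by ring. rewrite e, e0. ring.
Qed.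

Lemma act_mul A B x : mdet B <> 0 -> act (mmul A B) x = act A (act B x).
Proof.
  intros HB. unfold act at 1 2 3.
  destruct (vec_nrm (mv B (vec x))) as [k [Hk Hv]]. apply mv_nz; auto. apply vec_nz.
  rewrite Hv, mv_scale, nrm_scale, mv_mul; auto.
Qed.

Lemma act_scale k M x : k <> 0 -> act (mscale k M) x = act M x.
Proof.
  intros Hk. unfold act.
  replace (mv (mscale k M) (vec x)) with (k * fst (mv M (vec x)), k * snd (mv M (vec x))).
  apply nrm_scale; auto.
  destruct x, M; unfold mv, mscale; simpl; f_equal; ring.
Qed.

Lemma act_id x : act mid x = x.
Proof.
  destruct x; unfold act, nrm, mv, vec, mid; simpl.
  - destruct (Req_EM_T (0 * r + 1 * 1) 0). lra. f_equal. field.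
  - destruct (Req_EM_T (0 * 1 + 1 * 0) 0). auto. lra.
Qed.

Lemma act_some M x : act M (Some x) =
  if Req_EM_T (mc M * x + md M) 0 then None else Some ((ma M * x + mb M) / (mc M * x + md M)).
Proof. unfold act, nrm, mv, vec; simpl. do 2 rewrite Rmult_1_r. reflexivity. Qed.

Lemma act_some_eq M x y : mc M * x + md M <> 0 -> y = (ma M * x + mb M) / (mc M * x + md M) ->
  act M (Some x) = Some y.
Proof. intros H1 H2. rewrite act_some. destruct (Req_EM_T _ 0). contradiction. subst; auto. Qed.

Lemma act_some_inv M x y : act M (Some x) = Some y -> maps_to M x y.
Proof. rewrite act_some. destruct (Req_EM_T _ 0). discriminate. intros H; inversion H; split; auto. Qed.

Lemma maps_to_act M x y : maps_to M x y -> act M (Some x) = Some y.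
Proof. intros [H1 H2]. apply act_some_eq; auto. Qed.

Lemma act_inj M x y z : mdet M <> 0 -> act M (Some x) = Some z -> act M (Some y) = Some z -> x = y.
Proof.
  intros Hd H1 H2. apply act_some_inv in H1. apply act_some_inv in H2.
  destruct H1 as [a1 b1], H2 as [a2 b2]. rewrite b1 in b2.
  destruct M as [a b c d]; unfold mdet in Hd; simpl in *.
  apply (Rmult_eq_reg_l (a*d-b*c)); auto.
  assert ((a*x+b)*(c*y+d) = (a*y+b)*(c*x+d)).
  { field_simplify_eq in b2; auto. lra. }
  nra.
Qed.

Lemma Int_part_unique m z : IZR m <= z < IZR m + 1 -> Int_part z = m.
Proof.
  intros [H1 H2]. destruct (base_Int_part z) as [H3 H4].
  assert (IZR (Int_part z) < IZR m + 1) by lra.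
  assert (IZR m < IZR (Int_part z) + 1) by lra.
  rewrite <- plus_IZR in H, H0. apply lt_IZR in H. apply lt_IZR in H0. lia.
Qed.

Section Dig.
Variable p : nat.
Hypothesis hp : (3 <= p)%nat.

Let lp := lam_pos p hp.

Lemma rdigit_bounds y : (IZR (rdigit p y) - 1) * lam p <= y < IZR (rdigit p y) * lam p.
Proof.
  unfold rdigit. rewrite plus_IZR. destruct (base_Int_part (y / lam p)) as [H1 H2].
  set (k := IZR (Int_part (y / lam p))) in *.
  assert (k * lam p <= y). { apply (Rmult_le_reg_r (/ lam p)). apply Rinv_0_lt_compat; auto.
    replace (k * lam p * / lam p) with k by (field; lra). exact H1. }
  assert (y < (k + 1) * lam p). { apply (Rmult_lt_reg_r (/ lam p)). apply Rinv_0_lt_compat; auto.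
    replace ((k+1) * lam p * / lam p) with (k+1) by (field; lra). unfold Rdiv in H2. lra. }
  split; lra.
Qed.

Lemma rdigit_char y k : (IZR k - 1) * lam p <= y < IZR k * lam p -> rdigit p y = k.
Proof.
  intros [H1 H2]. unfold rdigit.
  assert (Int_part (y / lam p) = (k - 1)%Z).
  { apply Int_part_unique. rewrite minus_IZR. split.
    - apply (Rmult_le_reg_r (lam p)); auto. replace (y / lam p * lam p) with y by (field; lra). lra.
    - apply (Rmult_lt_reg_r (lam p)); auto. replace ((y / lam p) * lam p) with y by (field; lra). lra. }
  rewrite H. ring.
Qed.

Lemma rho_ge y : / lam p <= rho p y.
Proof.
  unfold rho. pose proof (rdigit_bounds y).
  set (r := IZR (rdigit p y)) in *.
  unfold Rdiv. rewrite Rmult_1_l. apply Rinv_le_contravar; lra.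
Qed.

Lemma rho_pos y : 0 < rho p y.
Proof. pose proof (rho_ge y). pose proof (Rinv_0_lt_compat _ lp). lra. Qed.

Definition Emat := Mat2 0 (-1) 1 (- lam p).

Definition stepM (x : pt) : mat2 :=
  match x with Some y => Mat2 0 (-1) 1 (- (IZR (rdigit p y) * lam p)) | None => Tmat end.
Definition rhoP (x : pt) : pt := match x with Some y => Some (rho p y) | None => Some 0 end.
Fixpoint iterP (n : nat) (x : pt) : pt := match n with O => x | S k => rhoP (iterP k x) end.
Fixpoint Phi (n : nat) (x : pt) : mat2 :=
  match n with O => mid | S k => mmul (stepM (iterP k x)) (Phi k x) end.

Lemma act_step x : act (stepM x) x = rhoP x.
Proof.
  destruct x as [y|]; simpl.
  - pose proof (rdigit_bounds y). apply act_some_eq; simpl.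
    + lra.
    + unfold rho. field. lra.
  - unfold act, nrm, mv, vec, Tmat; simpl. destruct (Req_EM_T _ 0). lra. f_equal. field.
Qed.

Lemma det_step x : mdet (stepM x) = 1.
Proof. destruct x; unfold mdet, Tmat; simpl; ring. Qed.

Lemma det_Phi n x : mdet (Phi n x) = 1.
Proof. induction n; simpl. unfold mdet, mid; simpl; ring. rewrite mdet_mul, det_step, IHn; ring. Qed.

Lemma act_Phi n x : act (Phi n x) x = iterP n x.
Proof. induction n; simpl. apply act_id. rewrite act_mul, IHn. apply act_step. rewrite det_Phi; lra. Qed.

Lemma iterP_add a b x : iterP (a + b) x = iterP a (iterP b x).
Proof. induction a; simpl; auto. rewrite IHa; auto. Qed.

Lemma Phi_add a b x : Phi (a + b) x = mmul (Phi a (iterP b x)) (Phi b x).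
Proof.
  induction a; simpl. rewrite mmul_id_l; auto.
  rewrite IHa, iterP_add, mmul_assoc. auto.
Qed.

Lemma rho_iter_add a b y : rho_iter p (a + b) y = rho_iter p a (rho_iter p b y).
Proof. induction a; simpl; auto. rewrite IHa; auto. Qed.

Lemma iterP_some n y : iterP n (Some y) = Some (rho_iter p n y).
Proof. induction n; simpl; auto. rewrite IHn; auto. Qed.

Lemma cf_digit_shift x j s : cf_digit p x (j + s) = cf_digit p (rho_iter p s x) j.
Proof. unfold cf_digit. rewrite rho_iter_add. auto. Qed.

Lemma Phi_digits n x y : (forall j, (j < n)%nat -> cf_digit p x j = cf_digit p y j) ->
  Phi n (Some x) = Phi n (Some y).
Proof.
  induction n; intros H; simpl; auto.
  rewrite IHn by (intros; apply H; lia).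
  rewrite !iterP_some. simpl. specialize (H n ltac:(lia)). unfold cf_digit in H. rewrite H. auto.
Qed.

Lemma Phi_S n x : Phi (S n) x = mmul (Phi n (rhoP x)) (stepM x).
Proof. replace (S n) with (n + 1)%nat by lia. rewrite Phi_add. simpl. rewrite mmul_id_r. auto. Qed.

End Dig.

Section ML.
Variable p : nat.
Hypothesis hp : (3 <= p)%nat.

Definition sgn (s : R) := s = 1 \/ s = -1.

Definition ML (V : mat2) (x : pt) : Prop :=
  exists m n s, sgn s /\ mmul (Phi p m (act V x)) V = mscale s (Phi p n x).

Lemma sgn_mul s t : sgn s -> sgn t -> sgn (s * t).
Proof. unfold sgn; intros [->| ->] [->| ->]; lra. Qed.
Lemma sgn_nz s : sgn s -> s <> 0.
Proof. unfold sgn; lra. Qed.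
Lemma sgn_sq s : sgn s -> s * s = 1.
Proof. unfold sgn; intros [->| ->]; lra. Qed.

Lemma ML_iter A x m n s : mdet A <> 0 -> sgn s ->
  mmul (Phi p m (act A x)) A = mscale s (Phi p n x) -> iterP p m (act A x) = iterP p n x.
Proof.
  intros HA Hs H.
  rewrite <- (act_Phi p hp m (act A x)), <- act_mul by auto. rewrite H.
  rewrite act_scale by (apply sgn_nz; auto). apply act_Phi; auto.
Qed.

Lemma ML_compose A B x : mdet A <> 0 -> mdet B <> 0 -> ML B x -> ML A (act B x) -> ML (mmul A B) x.
Proof.
  intros HA HB [m1 [n1 [s1 [Hs1 H1]]]] [m2 [n2 [s2 [Hs2 H2]]]].
  pose proof (ML_iter _ _ _ _ _ HB Hs1 H1) as I1.
  pose proof (ML_iter _ _ _ _ _ HA Hs2 H2) as I2.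
  exists (m1 + m2)%nat, (n2 + n1)%nat, (s1 * s2). split. apply sgn_mul; auto.
  rewrite act_mul by auto.
  rewrite Phi_add, <- mmul_assoc, mmul_assoc with (A := Phi p m2 _), H2, I2.
  rewrite mmul_scale_l, mmul_scale_r, mmul_assoc, <- Phi_add.
  replace (m1 + n2)%nat with (n2 + m1)%nat by lia.
  rewrite Phi_add, <- mmul_assoc, H1, I1, mmul_scale_r, <- Phi_add.
  rewrite mscale_scale. f_equal. ring.
Qed.

Lemma ML_inv A A' s x : sgn s -> mdet A <> 0 -> mmul A' A = mscale s mid -> mmul A A' = mscale s mid ->
  ML A x -> ML A' (act A x).
Proof.
  intros Hs HA H1 H2 [m [n [t [Ht H]]]].
  exists n, m, (t * s). split. apply sgn_mul; auto.
  rewrite <- act_mul by auto. rewrite H1, act_scale, act_id by (apply sgn_nz; auto).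
  assert (mmul (mscale t (Phi p n x)) A' = mscale s (Phi p m (act A x))).
  { rewrite <- H. rewrite <- mmul_assoc, H2, mmul_scale_r, mmul_id_r. auto. }
  rewrite mmul_scale_l in H0.
  assert (E: mmul (Phi p n x) A' = mscale t (mscale t (mmul (Phi p n x) A'))).
  { rewrite mscale_scale, sgn_sq, mscale_1 by auto; auto. }
  rewrite E, H0, !mscale_scale. replace (t * s) with (s * t) by ring. reflexivity.
Qed.

Lemma ML_scale V x k : sgn k -> ML V x -> ML (mscale k V) x.
Proof.
  intros Hk [m [n [s [Hs H]]]]. exists m, n, (k * s). split. apply sgn_mul; auto.
  rewrite act_scale by (apply sgn_nz; auto). rewrite mmul_scale_r, H, mscale_scale. auto.
Qed.

Lemma ML_id x : ML mid x.
Proof. exists 0%nat, 0%nat, 1. split. left; auto. rewrite act_id. simpl. rewrite mmul_id_l, mscale_1. auto. Qed.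

Lemma ML_step x : ML (stepM p x) x.
Proof. exists 0%nat, 1%nat, 1. split. left; auto. simpl. rewrite mmul_id_l, mmul_id_r, mscale_1. auto. Qed.

End ML.

Fixpoint mpow (M : mat2) (n : nat) : mat2 := match n with O => mid | S k => mmul M (mpow M k) end.

Lemma mpow_S_r M n : mpow M (S n) = mmul (mpow M n) M.
Proof. induction n; simpl. rewrite mmul_id_l, mmul_id_r; auto. rewrite IHn at 1. rewrite mmul_assoc; auto. Qed.

Lemma mpow_add M a b : mpow M (a + b) = mmul (mpow M a) (mpow M b).
Proof. induction a; simpl. rewrite mmul_id_l; auto. rewrite IHa, mmul_assoc; auto. Qed.

Lemma mdet_pow M n : mdet M = 1 -> mdet (mpow M n) = 1.
Proof. intros H; induction n; simpl. unfold mdet, mid; simpl; ring. rewrite mdet_mul, H, IHn; ring. Qed.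

Lemma sgn_pow n : sgn ((-1) ^ n).
Proof. induction n; simpl. left; auto. destruct IHn as [-> | ->]; [right|left]; ring. Qed.

Section E.
Variable p : nat.
Hypothesis hp : (3 <= p)%nat.
Let lp := lam_pos p hp.
Let l1 := lam_ge1 p hp.
Notation lm := (lam p).
Notation E := (Emat p).

Lemma E_pow n : mpow E (S n) =
  mscale ((-1) ^ (S n)) (Mat2 (- sq p n) (sq p (S n)) (- sq p (S n)) (sq p (S (S n)))).
Proof.
  induction n.
  - simpl. unfold Emat, mscale, mmul, mid; simpl. f_equal; ring.
  - rewrite mpow_S_r, IHn. rewrite !sq_rec. unfold Emat, mscale, mmul; simpl. f_equal; ring.
Qed.

Lemma E_pow_p : mpow E p = mscale ((-1) ^ (S p)) mid.
Proof.
  assert (H: mpow E p = mpow E (S (p-1))) by (f_equal; lia). rewrite H, E_pow.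
  replace (S (p-1)) with p by lia. replace (S p) with (S (S (p-1))) by lia. rewrite sq_rec.
  replace (S (p-1)) with p by lia. rewrite sq_p, sq_pm1 by auto.
  unfold mscale, mid; simpl. replace (p-1+1)%nat with p by lia. f_equal; ring.
Qed.

Definition E2i := Mat2 (lm * lm - 1) (- lm) lm (-1).

Lemma E_pow_pm2 : mpow E (p - 2) = mscale ((-1) ^ (p - 1)) E2i.
Proof.
  replace (p - 2)%nat with (S (p - 3)) at 1 by lia. rewrite E_pow.
  replace (S (p-3)) with (p-2)%nat by lia. replace (S (p-2)) with (p-1)%nat by lia.
  rewrite sq_pm3, sq_pm2, sq_pm1 by auto.
  replace (p-1)%nat with (S (p-2)) by lia. unfold mscale, E2i; simpl. f_equal; ring.
Qed.

Definition ee (j : nat) : R := sq p (j - 1) / sq p j.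

Lemma ee_1 : ee 1 = 0.
Proof. unfold ee; simpl. field. Qed.
Lemma ee_2 : ee 2 = 1 / lm.
Proof. unfold ee; simpl. field. lra. Qed.
Lemma ee_pm1 : ee (p - 1) = lm.
Proof. unfold ee. replace (p-1-1)%nat with (p-2)%nat by lia. rewrite sq_pm2, sq_pm1 by auto. field. Qed.

Lemma ee_rec j : (1 <= j <= p - 2)%nat -> 0 < lm - ee j /\ ee (S j) = 1 / (lm - ee j).
Proof.
  intros Hj. unfold ee.
  assert (Hs1 := sq_pos p hp j ltac:(lia)). assert (Hs2 := sq_pos p hp (S j) ltac:(lia)).
  replace (S j - 1)%nat with j by lia.
  assert (Hr : sq p (S j) = lm * sq p j - sq p (j - 1)).
  { replace (S j) with (S (S (j-1))) by lia. rewrite sq_rec. replace (S (j-1)) with j by lia. auto. }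
  split.
  - replace (lm - sq p (j - 1) / sq p j) with (sq p (S j) / sq p j) by (rewrite Hr; field; lra).
    apply Rdiv_lt_0_compat; auto.
  - rewrite Hr. field. split; [lra|]. rewrite <- Hr. lra.
Qed.

Lemma ee_lt_S j : (1 <= j <= p - 2)%nat -> ee j < ee (S j).
Proof.
  intros Hj. unfold ee.
  assert (Hs1 := sq_pos p hp j ltac:(lia)). assert (Hs2 := sq_pos p hp (S j) ltac:(lia)).
  replace (S j - 1)%nat with j by lia.
  pose proof (sq_cassini p (j - 1)). replace (S (j-1)) with j in H by lia.
  apply (Rmult_lt_reg_r (sq p j * sq p (S j))). nra.
  replace (sq p (j - 1) / sq p j * (sq p j * sq p (S j))) with (sq p (j-1) * sq p (S j)) by (field; lra).
  replace (sq p j / sq p (S j) * (sq p j * sq p (S j))) with (sq p j * sq p j) by (field; lra).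
  lra.
Qed.

Lemma ee_lt i j : (1 <= i)%nat -> (i < j)%nat -> (j <= p - 1)%nat -> ee i < ee j.
Proof.
  intros Hi Hij Hj. induction j. lia.
  destruct (Nat.eq_dec i j). subst. apply ee_lt_S; lia.
  apply Rlt_trans with (ee j). apply IHj; lia. apply ee_lt_S; lia.
Qed.

Lemma ee_le i j : (1 <= i)%nat -> (i <= j)%nat -> (j <= p - 1)%nat -> ee i <= ee j.
Proof. intros. destruct (Nat.eq_dec i j). subst; lra. left; apply ee_lt; lia. Qed.

Lemma ee_nonneg j : (1 <= j <= p - 1)%nat -> 0 <= ee j.
Proof. intros. rewrite <- ee_1. apply ee_le; lia. Qed.

Lemma ee_le_lam j : (1 <= j <= p - 1)%nat -> ee j <= lm.
Proof. intros. rewrite <- ee_pm1. apply ee_le; lia. Qed.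

Lemma ee_lt_lam j : (1 <= j <= p - 2)%nat -> ee j < lm.
Proof. intros. rewrite <- ee_pm1. apply ee_lt; lia. Qed.

Lemma rdigit_1 z : 0 <= z < lm -> rdigit p z = 1%Z.
Proof. intros. apply (rdigit_char p hp). simpl. lra. Qed.

Lemma rdigit_2 : rdigit p lm = 2%Z.
Proof. apply (rdigit_char p hp). simpl. lra. Qed.

Lemma step_1 z : 0 <= z < lm -> stepM p (Some z) = E.
Proof. intros. simpl. rewrite rdigit_1 by auto. unfold Emat. f_equal. simpl; ring. Qed.

Lemma rho_1 z : 0 <= z < lm -> rho p z = 1 / (lm - z).
Proof. intros. unfold rho. rewrite rdigit_1 by auto. simpl. f_equal. ring. Qed.

Lemma rho_lam : rho p lm = ee 2.
Proof. unfold rho. rewrite rdigit_2, ee_2. simpl. f_equal. ring. Qed.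

Lemma rho_ee j : (1 <= j <= p - 2)%nat -> rho p (ee j) = ee (S j).
Proof.
  intros. rewrite rho_1. symmetry; apply ee_rec; auto.
  split. apply ee_nonneg; lia. apply ee_lt_lam; lia.
Qed.

Lemma iter_ee2 k : (k <= p - 3)%nat -> rho_iter p k (ee 2) = ee (k + 2).
Proof.
  induction k; intros Hk; simpl; auto.
  rewrite IHk by lia. rewrite rho_ee by lia. f_equal; lia.
Qed.

Lemma Phi_ee2 k : (k <= p - 3)%nat -> Phi p k (Some (ee 2)) = mpow E k.
Proof.
  induction k; intros Hk; simpl; auto.
  rewrite IHk by lia. rewrite iterP_some, iter_ee2 by lia. rewrite step_1. auto.
  split. apply ee_nonneg; lia. apply ee_lt_lam; lia.
Qed.

Lemma iter_lam_cycle : rho_iter p (p - 2) lm = lm.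
Proof.
  replace (p-2)%nat with (p - 3 + 1)%nat by lia. rewrite rho_iter_add. simpl.
  rewrite rho_lam, iter_ee2 by lia. replace (p - 3 + 2)%nat with (p-1)%nat by lia. apply ee_pm1.
Qed.

Lemma iter_lam_small i : (1 <= i <= p - 3)%nat -> rho_iter p i lm = ee (S i).
Proof.
  intros. replace i with (i - 1 + 1)%nat by lia. rewrite rho_iter_add. simpl.
  rewrite rho_lam, iter_ee2 by lia. f_equal; lia.
Qed.

Lemma iter_lam_mult q : rho_iter p (q * (p - 2)) lm = lm.
Proof.
  induction q; simpl; auto. rewrite rho_iter_add, IHq. apply iter_lam_cycle.
Qed.

Lemma iter_lam_mod n : rho_iter p n lm = rho_iter p (n mod (p - 2)) lm.
Proof.
  rewrite (Nat.div_mod_eq n (p-2)) at 1. rewrite Nat.add_comm, rho_iter_add.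
  rewrite Nat.mul_comm, iter_lam_mult. auto.
Qed.

Lemma iter_lam_range n : 0 <= rho_iter p n lm <= lm /\
  (rho_iter p n lm = lm <-> (n mod (p - 2) = 0)%nat).
Proof.
  rewrite iter_lam_mod. assert (Hm := Nat.mod_upper_bound n (p-2) ltac:(lia)).
  destruct (Nat.eq_dec (n mod (p-2)) 0) as [E0|E0].
  - rewrite E0. simpl. split; [lra | tauto].
  - rewrite iter_lam_small by lia. split. split. apply ee_nonneg; lia. apply ee_le_lam; lia.
    split; intros; [|contradiction]. pose proof (ee_lt_lam (S (n mod (p-2))) ltac:(lia)). lra.
Qed.

Lemma digit_lam n : cf_digit p lm n = (if Nat.eqb (n mod (p - 2)) 0 then 2 else 1)%Z.
Proof.
  unfold cf_digit. destruct (iter_lam_range n) as [H1 H2].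
  destruct (Nat.eqb_spec (n mod (p-2)) 0).
  - apply H2 in e. rewrite e. apply rdigit_2.
  - apply rdigit_1. split. lra. destruct H1. destruct H0; auto. exfalso; apply n0, H2; auto.
Qed.

End E.

Section MLgen.
Variable p : nat.
Hypothesis hp : (3 <= p)%nat.
Let lp := lam_pos p hp.
Let l1 := lam_ge1 p hp.
Notation lm := (lam p).
Notation E := (Emat p).
Notation SS := (Smat p).
Notation SSi := (Sinv p).
Notation T := Tmat.
Notation ML := (ML p).

Lemma det_S : mdet SS = 1. Proof. unfold mdet, Smat; simpl; ring. Qed.
Lemma det_Si : mdet SSi = 1. Proof. unfold mdet, Sinv; simpl; ring. Qed.
Lemma det_T : mdet T = 1. Proof. unfold mdet, Tmat; simpl; ring. Qed.
Lemma det_Ti : mdet Tinv = 1. Proof. unfold mdet, Tinv; simpl; ring. Qed.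
Lemma det_E : mdet E = 1. Proof. unfold mdet, Emat; simpl; ring. Qed.
Lemma nz1 : (1:R) <> 0. Proof. lra. Qed.
Hint Resolve nz1 : core.

Lemma act_S y : act SS (Some y) = Some (y + lm).
Proof. apply act_some_eq; simpl; [lra | field]. Qed.
Lemma act_Si y : act SSi (Some y) = Some (y - lm).
Proof. apply act_some_eq; simpl; [lra | field]. Qed.
Lemma act_T y : y <> 0 -> act T (Some y) = Some (- 1 / y).
Proof. intros. apply act_some_eq; simpl; [lra | field; auto]. Qed.
Lemma act_T0 : act T (Some 0) = None.
Proof. rewrite act_some. simpl. destruct (Req_EM_T _ 0); auto. lra. Qed.
Lemma act_Tinf : act T None = Some 0.
Proof. unfold act, nrm, mv, vec, Tmat; simpl. destruct (Req_EM_T _ 0). lra. f_equal; field. Qed.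
Lemma act_Sinf : act SS None = None.
Proof. unfold act, nrm, mv, vec, Smat; simpl. destruct (Req_EM_T _ 0); auto. lra. Qed.
Lemma act_E u : u <> lm -> act E (Some u) = Some (1 / (lm - u)).
Proof. intros. apply act_some_eq; simpl; [lra | field; lra]. Qed.

Lemma ML_S x : ML SS x.
Proof.
  destruct x as [y|].
  - exists 1%nat, 1%nat, 1. split. left; auto. rewrite act_S. simpl.
    rewrite mscale_1, !mmul_id_r.
    assert (rdigit p (y + lm) = (rdigit p y + 1)%Z).
    { apply (rdigit_char p hp). pose proof (rdigit_bounds p hp y). rewrite plus_IZR. simpl. lra. }
    rewrite H, plus_IZR. unfold mmul, Smat; simpl. f_equal; ring.
  - exists 2%nat, p, (- ((-1) ^ (S p))). split.
    { destruct (sgn_pow (S p)) as [-> | ->]; [right|left]; ring. }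
    assert (Hp: Phi p p None = Phi p (S (S (1 + (p-3)))) None) by (f_equal; lia). rewrite Hp.
    rewrite act_Sinf.
    rewrite (Phi_S p hp (S (1 + (p-3))) None), (Phi_S p hp (1 + (p-3))). rewrite (Phi_S p hp 1). simpl rhoP. rewrite Phi_add.
    assert (H0 : rho p 0 = ee p 2).
    { rewrite (rho_1 p hp) by lra. rewrite (ee_2 p hp). f_equal; ring. }
    rewrite H0, iterP_some, (iter_ee2 p hp) by lia. replace (p - 3 + 2)%nat with (p - 1)%nat by lia.
    rewrite (ee_pm1 p hp), (Phi_ee2 p hp) by lia. simpl Phi.
    rewrite (step_1 p hp 0) by lra. 
    assert (HP : mmul (mpow E (p-3)) E = mpow E (p - 2)).
    { rewrite <- mpow_S_r. f_equal. lia. }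
    simpl stepM. rewrite rdigit_2 by auto.
    transitivity (mscale (- (-1) ^ S p) (mmul (mmul (Mat2 0 (-1) 1 (- (2 * lm))) (mmul (mpow E (p - 3)) E)) Tmat)).
    2: { f_equal. rewrite !mmul_id_r. rewrite !mmul_assoc. auto. }
    rewrite HP, (E_pow_pm2 p hp). replace (S p) with (p - 1 + 2)%nat by lia.
    rewrite pow_add. simpl Phi. rewrite (rdigit_1 p hp 0) by lra. destruct (sgn_pow (p-1)) as [Hs|Hs]; rewrite Hs; unfold mscale, mmul, Emat, E2i, Tmat, Smat, mid; simpl; f_equal; ring.
Qed.

Lemma ML_Si x : ML SSi x.
Proof.
  assert (H := ML_inv p SS SSi 1 (act SSi x) ltac:(left; auto)).
  rewrite <- act_mul in H by (rewrite det_Si; lra).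
  replace (mmul SS SSi) with (mscale 1 mid) in H by (unfold mscale, mmul, Smat, Sinv, mid; simpl; f_equal; ring).
  rewrite mscale_1, act_id in H. apply H.
  rewrite det_S; lra. unfold mscale, mmul, Smat, Sinv, mid; simpl; f_equal; ring.
  unfold mscale, mmul, Smat, Sinv, mid; simpl; f_equal; ring. apply ML_S.
Qed.

Lemma TT : mmul T T = mscale (-1) mid.
Proof. unfold mscale, mmul, Tmat, mid; simpl; f_equal; ring. Qed.

Lemma ML_T_sym x : ML T x -> ML T (act T x).
Proof. intros H. apply (ML_inv p T T (-1)); auto. right; auto. rewrite det_T; lra. apply TT. apply TT. Qed.

Lemma actTT x : act T (act T x) = x.
Proof. rewrite <- act_mul by (rewrite det_T; lra). rewrite TT, act_scale, act_id; auto. lra. Qed.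

Lemma ML_T_neg y : - lm <= y < 0 -> ML T (Some y).
Proof.
  intros Hy. assert (stepM p (Some y) = T).
  { simpl. assert (rdigit p y = 0%Z). { apply (rdigit_char p hp). simpl. lra. }
    rewrite H. unfold Tmat. f_equal. simpl; ring. }
  rewrite <- H. apply ML_step.
Qed.

Lemma ML_T_big y : 1 / lm <= y -> ML T (Some y).
Proof.
  intros Hy. assert (0 < y). { assert (0 < 1 / lm) by (apply Rdiv_lt_0_compat; lra). lra. }
  assert (H1 : act T (Some (-1 / y)) = Some y).
  { rewrite act_T. f_equal. field. lra. unfold Rdiv. apply Rmult_integral_contrapositive_currified; [lra|apply Rinv_neq_0_compat; lra]. }
  rewrite <- H1. apply ML_T_sym. apply ML_T_neg. split.
  - apply (Rmult_le_reg_r y); auto. replace (-1 / y * y) with (-1) by (field; lra).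
    assert (lm * (1 / lm) <= lm * y) by (apply Rmult_le_compat_l; lra).
    replace (lm * (1/lm)) with 1 in H0 by (field; lra). lra.
  - apply Rdiv_neg_pos; lra.
Qed.

Lemma ML_E_triv z : 0 <= z < lm -> ML E (Some z).
Proof. intros. rewrite <- (step_1 p hp z) by auto. apply ML_step. Qed.

Lemma ML_pow A n y : mdet A = 1 -> (forall i, (i < n)%nat -> ML A (act (mpow A i) y)) -> ML (mpow A n) y.
Proof.
  intros HA H. induction n; simpl. apply ML_id.
  apply ML_compose; auto. rewrite HA; lra. rewrite mdet_pow; auto; lra.
Qed.

Lemma E_loc u : lm < u -> forall k, (2 <= k <= p - 1)%nat ->
  exists z, act (mpow E k) (Some u) = Some z /\ ee p (k - 1) < z < ee p k.
Proof.
  intros Hu k Hk. induction k. lia.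
  destruct (Nat.eq_dec k 1).
  - subst. simpl. rewrite mmul_id_r. rewrite act_mul by (rewrite det_E; lra).
    rewrite act_E by lra.
    assert (Ha : 1 / (lm - u) < 0) by (unfold Rdiv; rewrite Rmult_1_l; apply Rinv_lt_0_compat; lra).
    rewrite act_E by lra. eexists; split; [reflexivity|].
    rewrite (ee_1 p), (ee_2 p hp). split. apply Rdiv_lt_0_compat; lra.
    unfold Rdiv. rewrite !Rmult_1_l. apply Rinv_lt_contravar. nra. lra.
  - destruct IHk as [z [Hz1 Hz2]]. lia. simpl. rewrite act_mul by (rewrite mdet_pow; [lra|apply det_E]).
    rewrite Hz1. assert (Hk2 : ee p k < lm) by (apply ee_lt_lam; lia).
    rewrite act_E by lra. eexists; split; [reflexivity|].
    destruct (ee_rec p hp (k-1) ltac:(lia)) as [A1 A2]. replace (S (k-1)) with k in A2 by lia.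
    destruct (ee_rec p hp k ltac:(lia)) as [B1 B2].
    try rewrite Nat.sub_0_r. rewrite A2 in Hz2 |- *. rewrite B2.
    unfold Rdiv in *. rewrite !Rmult_1_l in *.
    split; apply Rinv_lt_contravar; try nra.
Qed.

End MLgen.

Section MLT.
Variable p : nat.
Hypothesis hp : (3 <= p)%nat.
Let lp := lam_pos p hp.
Let l1 := lam_ge1 p hp.
Notation lm := (lam p).
Notation E := (Emat p).
Notation SS := (Smat p).
Notation SSi := (Sinv p).
Notation T := Tmat.
Notation ML := (ML p).

Lemma rot u : lm < u -> ML E (Some u) -> ML E (act E (Some u)).
Proof.
  intros Hu HE.
  set (w := act E (Some u)).
  assert (HdE : mdet E <> 0) by (rewrite det_E; lra).
  assert (Hdp : forall n, mdet (mpow E n) <> 0) by (intros; rewrite mdet_pow; [lra|apply det_E]).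
  assert (H1 : ML (mpow E (p - 1)) (act E w)).
  { apply (ML_pow p hp); [apply det_E|]. intros i Hi.
    rewrite <- act_mul by auto. unfold w. rewrite <- act_mul by auto.
    rewrite <- !mmul_assoc.
    match goal with |- ML E (act ?M _) => replace M with (mpow E (i + 2)) end.
    2: { rewrite mpow_add. simpl. rewrite !mmul_id_r. auto. }
    destruct (Nat.eq_dec i (p - 2)).
    - subst. replace (p - 2 + 2)%nat with p by lia. rewrite (E_pow_p p hp), act_scale, act_id; auto.
      apply sgn_nz, sgn_pow.
    - destruct (E_loc p hp u Hu (i + 2) ltac:(lia)) as [z [Hz1 Hz2]]. rewrite Hz1.
      apply (ML_E_triv p hp). split.
      + pose proof (ee_nonneg p hp (i + 2 - 1) ltac:(lia)). lra.
      + pose proof (ee_le_lam p hp (i+2) ltac:(lia)). lra. }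
  assert (Hp1 : mmul E (mpow E (p - 1)) = mscale ((-1) ^ S p) mid).
  { rewrite <- (E_pow_p p hp). change (mmul E (mpow E (p-1))) with (mpow E (S (p-1))). f_equal. lia. }
  assert (Hp2 : mmul (mpow E (p - 1)) E = mscale ((-1) ^ S p) mid).
  { rewrite <- (E_pow_p p hp), <- mpow_S_r. f_equal. lia. }
  pose proof (ML_inv p _ _ _ _ (sgn_pow (S p)) (Hdp (p-1)%nat) Hp1 Hp2 H1) as H2.
  rewrite <- act_mul in H2 by auto. rewrite Hp2, act_scale, act_id in H2; auto.
  apply sgn_nz, sgn_pow.
Qed.

Lemma E_TSi : mmul T SSi = E.
Proof. unfold mmul, Tmat, Sinv, Emat; simpl; f_equal; ring. Qed.
Lemma E_S : mmul E SS = T.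
Proof. unfold mmul, Tmat, Smat, Emat; simpl; f_equal; ring. Qed.

Lemma descent w : 0 < w -> ML T (Some w) -> ML T (Some (w / (1 + lm * w))).
Proof.
  intros Hw HT.
  assert (A1 : ML E (Some (w + lm))).
  { rewrite <- E_TSi. apply ML_compose; auto. rewrite det_T; lra. rewrite det_Si; lra.
    apply ML_Si; auto. rewrite act_Si. replace (w + lm - lm) with w by ring. auto. }
  apply rot in A1; [|lra]. rewrite act_E in A1 by lra.
  assert (A2 : ML T (Some (-1 / w - lm))).
  { rewrite <- E_S. apply ML_compose; auto. rewrite det_E; lra. rewrite det_S; lra.
    apply ML_S; auto. rewrite act_S. replace (-1 / w - lm + lm) with (1 / (lm - (w + lm))) by (field; repeat split; lra). auto. }
  apply ML_T_sym in A2; auto. rewrite act_T in A2.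
  - replace (w / (1 + lm * w)) with (-1 / (-1 / w - lm)). auto.
    replace (-1 / w - lm) with (-(1 + lm*w)/w) by (field; repeat split; lra). field. split; [nra|lra].
  - assert (-1 / w < 0). { unfold Rdiv. apply Rmult_neg_pos. lra. apply Rinv_0_lt_compat; lra. } lra.
Qed.

Lemma ML_T_small_ind n : forall v, 0 < v -> 1 / v <= INR (S n) * lm -> ML T (Some v).
Proof.
  induction n; intros v Hv Hb.
  - apply ML_T_big; auto. simpl in Hb. rewrite Rmult_1_l in Hb.
    apply (Rmult_le_reg_r (1 / v)). apply Rdiv_lt_0_compat; lra.
    replace (v * (1/v)) with 1 by (field; repeat split; lra).
    replace (1 / lm * (1 / v)) with ((1/v) / lm) by (field; repeat split; lra).
    apply (Rmult_le_reg_r lm); auto. replace (1 / v / lm * lm) with (1/v) by (field; repeat split; lra). lra.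
  - destruct (Rle_lt_dec (1 / lm) v). apply ML_T_big; auto.
    assert (Hl : lm < 1 / v).
    { apply (Rmult_lt_reg_r v); auto. replace (1/v * v) with 1 by (field; repeat split; lra).
      apply (Rmult_lt_reg_l (1/lm)). apply Rdiv_lt_0_compat; lra.
      replace (1 / lm * (lm * v)) with v by (field; repeat split; lra). lra. }
    assert (Hlv : lm * v < 1).
    { apply (Rmult_lt_reg_r (1/v)). apply Rdiv_lt_0_compat; lra.
      replace (lm*v*(1/v)) with lm by (field; lra). lra. }
    set (w := 1 / (1 / v - lm)).
    assert (Hw : 0 < w) by (apply Rdiv_lt_0_compat; lra).
    assert (HT : ML T (Some w)).
    { apply IHn; auto. unfold w. replace (1 / (1 / (1 / v - lm))) with (1/v - lm) by (field; split; lra).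
      rewrite !S_INR in *. lra. }
    apply descent in HT; auto.
    replace (w / (1 + lm * w)) with v in HT; auto.
    unfold w. field. split; [lra|]. split; [lra|].
    replace (1 - v * lm) with (v * (1 / v - lm)) by (field; repeat split; lra). nra.
Qed.

Lemma ML_T x : ML T x.
Proof.
  destruct x as [y|].
  2: { exists 0%nat, 1%nat, 1. split. left; auto. rewrite act_Tinf. simpl. rewrite mmul_id_l, mmul_id_r, mscale_1. auto. }
  destruct (Rtotal_order y 0) as [Hy|[Hy|Hy]].
  - destruct (Rle_lt_dec (- lm) y). apply ML_T_neg; auto; lra.
    assert (H : act T (Some (-1 / y)) = Some y) by (rewrite act_T; [f_equal; field; lra | unfold Rdiv; apply Rmult_integral_contrapositive_currified; [lra|apply Rinv_neq_0_compat; lra]]).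
    rewrite <- H. apply ML_T_sym; auto.
    assert (0 < -1 / y) by (unfold Rdiv; apply Rmult_neg_neg; [lra|apply Rinv_lt_0_compat; lra]).
    destruct (archimed (1 / (-1 / y) / lm)) as [Ha _].
    assert (0 <= up (1 / (-1 / y) / lm))%Z.
    { apply le_IZR. assert (0 < 1 / (-1 / y) / lm). { apply Rdiv_lt_0_compat; auto. apply Rdiv_lt_0_compat; lra. } lra. }
    apply (ML_T_small_ind (Z.to_nat (up (1 / (-1 / y) / lm)))); auto.
    rewrite S_INR, INR_IZR_INZ, Z2Nat.id by auto.
    apply (Rmult_le_reg_r (/ lm)). apply Rinv_0_lt_compat; auto.
    replace ((IZR (up (1 / (-1 / y) / lm)) + 1) * lm * / lm) with (IZR (up (1 / (-1 / y) / lm)) + 1) by (field; repeat split; lra).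
    unfold Rdiv at 1 in Ha. lra.
  - subst. exists 1%nat, 0%nat, (-1). split. right; auto. rewrite act_T0. simpl.
    rewrite mmul_id_r. apply TT.
  - destruct (archimed (1 / y / lm)) as [Ha _].
    assert (0 <= up (1 / y / lm))%Z.
    { apply le_IZR. assert (0 < 1 / y / lm). { apply Rdiv_lt_0_compat; auto. apply Rdiv_lt_0_compat; lra. } lra. }
    apply (ML_T_small_ind (Z.to_nat (up (1 / y / lm)))); auto.
    rewrite S_INR, INR_IZR_INZ, Z2Nat.id by auto.
    apply (Rmult_le_reg_r (/ lm)). apply Rinv_0_lt_compat; auto.
    replace ((IZR (up (1 / y / lm)) + 1) * lm * / lm) with (IZR (up (1 / y / lm)) + 1) by (field; repeat split; lra).
    unfold Rdiv at 1 in Ha. lra.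
Qed.

Lemma ML_Ti x : ML Tinv x.
Proof.
  replace Tinv with (mscale (-1) T) by (unfold mscale, Tinv, Tmat; simpl; f_equal; ring).
  apply ML_scale. right; auto. apply ML_T.
Qed.

Lemma inGp_det V : inGp p V -> mdet V = 1.
Proof.
  induction 1; rewrite ?mdet_mul, ?IHinGp; unfold mdet, mid, Smat, Sinv, Tmat, Tinv; simpl; ring.
Qed.

Lemma ML_Gp V x : inGp p V -> ML V x.
Proof.
  intros H. revert x. induction H; intros x.
  - apply ML_id.
  - apply ML_compose; auto. rewrite det_S; lra. rewrite inGp_det; auto; lra. apply ML_S; auto.
  - apply ML_compose; auto. rewrite det_Si; lra. rewrite inGp_det; auto; lra. apply ML_Si; auto.
  - apply ML_compose; auto. rewrite det_T; lra. rewrite inGp_det; auto; lra. apply ML_T.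
  - apply ML_compose; auto. rewrite det_Ti; lra. rewrite inGp_det; auto; lra. apply ML_Ti.
Qed.

End MLT.

Lemma bernoulli (x : R) (n : nat) : 0 <= x -> 1 + INR n * x <= (1 + x) ^ n.
Proof.
  intros Hx. induction n. simpl. lra. rewrite S_INR. simpl pow.
  assert (0 <= INR n) by apply pos_INR.
  assert (1 <= (1 + x) ^ n) by (apply pow_R1_Rle; lra). nra.
Qed.

Lemma pow_unbounded (nu M : R) : 1 < nu -> exists n, M < nu ^ n.
Proof.
  intros H. destruct (archimed (Rabs M / (nu - 1))) as [Ha _].
  assert (0 <= up (Rabs M / (nu - 1)))%Z.
  { apply le_IZR. assert (0 <= Rabs M / (nu - 1)) by (unfold Rdiv; apply Rmult_le_pos; [apply Rabs_pos|left; apply Rinv_0_lt_compat; lra]). lra. }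
  exists (Z.to_nat (up (Rabs M / (nu - 1)))).
  pose proof (bernoulli (nu - 1) (Z.to_nat (up (Rabs M / (nu - 1)))) ltac:(lra)).
  replace (1 + (nu - 1)) with nu in H1 by ring.
  rewrite INR_IZR_INZ, Z2Nat.id in H1 by auto.
  assert (Rabs M / (nu - 1) * (nu - 1) < IZR (up (Rabs M / (nu - 1))) * (nu - 1)) by (apply Rmult_lt_compat_r; lra).
  replace (Rabs M / (nu - 1) * (nu - 1)) with (Rabs M) in H2 by (field; lra).
  pose proof (Rle_abs M). lra.
Qed.

Section Cyc.
Variable p : nat.
Hypothesis hp : (3 <= p)%nat.
Let lp := lam_pos p hp.
Let l1 := lam_ge1 p hp.
Notation lm := (lam p).
Notation E := (Emat p).

Definition Uq (q : R) := Mat2 (1 - q * lm ^ 2) (q * lm ^ 3) (- q * lm) (1 + q * lm ^ 2).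

Lemma Phi_cycle : exists s, sgn s /\ Phi p (p - 2) (Some lm) = mscale s (Mat2 (lm^2 - 1) (- lm^3) lm (- lm^2 - 1)).
Proof.
  exists ((-1) ^ (p - 1)). split. apply sgn_pow.
  replace (p - 2)%nat with (p - 3 + 1)%nat by lia. rewrite Phi_add. simpl iterP.
  rewrite (rho_lam p hp), (Phi_ee2 p hp) by lia. simpl Phi. rewrite (rdigit_2 p hp), mmul_id_r.
  replace (Mat2 0 (-1) 1 (- (2 * lm))) with (mmul E (Sinv p)) by (unfold mmul, Emat, Sinv; simpl; f_equal; ring).
  rewrite mmul_assoc, <- mpow_S_r. replace (S (p - 3)) with (p - 2)%nat by lia.
  rewrite (E_pow_pm2 p hp). unfold mscale, mmul, E2i, Sinv; simpl; f_equal; ring.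
Qed.

Lemma Phi_cycle_q q : exists s, sgn s /\ Phi p (q * (p - 2)) (Some lm) = mscale s (Uq (INR q)).
Proof.
  induction q.
  - exists 1. split. left; auto. simpl. unfold Uq, mscale, mid; simpl; f_equal; ring.
  - destruct IHq as [s [Hs H]]. destruct Phi_cycle as [s' [Hs' H']].
    exists (- (s * s')). split. { unfold sgn; destruct (sgn_mul s s' Hs Hs') as [E1|E1]; rewrite E1; [right|left]; ring. }
    replace (S q * (p - 2))%nat with ((p - 2) + q * (p - 2))%nat by (simpl; lia).
    rewrite Phi_add, H, iterP_some, (iter_lam_mult p hp), H', S_INR.
    unfold Uq, mscale, mmul; simpl; f_equal; ring.
Qed.

Lemma Uq_fix q s z : 0 < q -> sgn s -> act (mscale s (Uq q)) (Some z) = Some z -> z = lm.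
Proof.
  intros Hq Hs H. rewrite act_scale in H by (apply sgn_nz; auto).
  apply act_some_inv in H. destruct H as [H1 H2]. unfold Uq in *; simpl ma in *; simpl mb in *; simpl mc in *; simpl md in *.
  assert (z * (- q * lm * z + (1 + q * lm ^ 2)) = (1 - q * lm ^ 2) * z + q * lm ^ 3).
  { rewrite H2 at 1. field. intro Hc; apply H1; rewrite <- Hc; ring. }
  assert (q * lm * ((z - lm) * (z - lm)) = 0) by nra.
  assert (Hz: (z - lm) * (z - lm) = 0).
  { apply Rmult_integral in H0. destruct H0; auto. exfalso. assert (0 < q * lm) by nra. lra. }
  apply Rmult_integral in Hz. lra.
Qed.

Lemma tr_Uq q : trace (Uq q) = 2.
Proof. unfold trace, Uq; simpl; ring. Qed.

Lemma digit_ge1 x j : (1 <= j)%nat -> (1 <= cf_digit p x j)%Z.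
Proof.
  intros Hj. unfold cf_digit. replace j with (S (j - 1)) by lia. simpl.
  pose proof (rho_ge p hp (rho_iter p (j - 1) x)).
  pose proof (rdigit_bounds p hp (rho p (rho_iter p (j-1) x))).
  assert (0 < / lm) by (apply Rinv_0_lt_compat; lra).
  assert (0 < IZR (rdigit p (rho p (rho_iter p (j - 1) x)))).
  { destruct H0. assert (0 < IZR (rdigit p (rho p (rho_iter p (j - 1) x))) * lm) by lra. nra. }
  apply lt_IZR in H2. lia.
Qed.

Lemma digit2_ge x : (2 <= rdigit p x)%Z -> lm <= x.
Proof.
  intros H. apply IZR_le in H. pose proof (rdigit_bounds p hp x). simpl in H. nra.
Qed.

End Cyc.

Lemma decay (X : nat -> R) w mu : 1 < mu ->
  (forall n, X (S n) - w <= (X n - w) * / mu) -> forall n, X n - w <= (X 0%nat - w) * (/ mu) ^ n.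
Proof.
  intros Hm Hs n. assert (0 < / mu) by (apply Rinv_0_lt_compat; lra). induction n. simpl. lra.
  apply Rle_trans with ((X n - w) * / mu). apply Hs.
  simpl pow. replace ((X 0%nat - w) * (/ mu * (/ mu) ^ n)) with (((X 0%nat - w) * (/ mu) ^ n) * / mu) by ring.
  apply Rmult_le_compat_r; lra.
Qed.

Lemma grow (X : nat -> R) w nu : 1 < nu ->
  (forall n, nu * (X n - w) <= X (S n) - w) -> forall n, (X 0%nat - w) * nu ^ n <= X n - w.
Proof.
  intros Hm Hs n. induction n. simpl. lra.
  apply Rle_trans with (nu * (X n - w)); [|apply Hs].
  simpl pow. replace ((X 0%nat - w) * (nu * nu ^ n)) with (nu * ((X 0%nat - w) * nu ^ n)) by ring.
  apply Rmult_le_compat_l; lra.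
Qed.

Lemma small_pow mu eps : 1 < mu -> 0 < eps -> exists n, (/ mu) ^ n < eps.
Proof.
  intros Hm He. destruct (pow_unbounded mu (/ eps) Hm) as [n Hn].
  exists n. rewrite pow_inv. assert (0 < / eps) by (apply Rinv_0_lt_compat; lra).
  assert (0 < mu ^ n) by (apply pow_lt; lra).
  replace eps with (/ / eps) by (field; lra). apply Rinv_lt_contravar; nra.
Qed.

Lemma phi_arg (X : nat -> R) (w L U fL sg : R) : w < L -> 1 < fL ->
  (forall n, L <= X n < U) -> (forall n, 0 < fL + sg * (X n - L)) ->
  (forall n, X (S n) - w = (X n - w) / (fL + sg * (X n - L))) -> X 1%nat = X 0%nat.
Proof.
  intros HwL Hf HX Hpos Hrec.
  assert (Hxw : forall n, 0 < X n - w) by (intro n; destruct (HX n); lra).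
  destruct (Rle_lt_dec 0 sg) as [Hs|Hs].
  - exfalso.
    assert (H : forall n, X (S n) - w <= (X n - w) * / fL).
    { intro n. rewrite Hrec. unfold Rdiv. apply Rmult_le_compat_l. left; apply Hxw.
      apply Rinv_le_contravar. lra. destruct (HX n). nra. }
    pose proof (decay X w fL Hf H) as D.
    destruct (small_pow fL ((L - w) / (X 0%nat - w)) Hf) as [n Hn].
    { apply Rdiv_lt_0_compat; auto. lra. }
    specialize (D n). destruct (HX n).
    assert ((X 0%nat - w) * (/ fL) ^ n < L - w).
    { apply (Rmult_lt_compat_l (X 0%nat - w)) in Hn; auto. replace ((X 0%nat - w) * ((L - w) / (X 0%nat - w))) with (L - w) in Hn by (field; specialize (Hxw 0%nat); lra). lra. }
    lra.
  - set (f0 := fL + sg * (X 0%nat - L)).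
    assert (Hf0 : 0 < f0) by apply Hpos.
    destruct (Rtotal_order f0 1) as [H1|[H1|H1]].
    + exfalso.
      assert (Hinc : forall n, X 0%nat <= X n /\ / f0 * (X n - w) <= X (S n) - w).
      { induction n.
        - split. lra. rewrite Hrec. fold f0. unfold Rdiv. rewrite Rmult_comm. lra.
        - destruct IHn as [I1 I2].
          assert (Hle : X 0%nat <= X (S n)).
          { assert (/ f0 * (X n - w) >= X n - w). { assert (1 < / f0). { rewrite <- Rinv_1. apply Rinv_lt_contravar; lra. }
              specialize (Hxw n). nra. } lra. }
          split; auto. rewrite (Hrec (S n)). unfold Rdiv.
          assert (/ f0 <= / (fL + sg*(X (S n) - L))) by (apply Rinv_le_contravar; [apply Hpos| unfold f0; nra]).
          specialize (Hxw (S n)). nra. }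
      assert (Hnu : 1 < / f0) by (rewrite <- Rinv_1; apply Rinv_lt_contravar; lra).
      pose proof (grow X w (/ f0) Hnu (fun n => proj2 (Hinc n))) as G.
      destruct (pow_unbounded (/ f0) ((U - w) / (X 0%nat - w)) Hnu) as [n Hn].
      specialize (G n). destruct (HX n).
      assert (U - w < (X 0%nat - w) * (/ f0) ^ n).
      { apply (Rmult_lt_compat_l (X 0%nat - w)) in Hn; auto. replace ((X 0%nat - w) * ((U - w) / (X 0%nat - w))) with (U - w) in Hn by (field; specialize (Hxw 0%nat); lra). lra. }
      lra.
    + pose proof (Hrec 0%nat) as H. fold f0 in H. rewrite H1 in H. unfold Rdiv in H. rewrite Rinv_1 in H. lra.
    + exfalso.
      assert (Hdec : forall n, X n <= X 0%nat /\ X (S n) - w <= (X n - w) * / f0).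
      { induction n.
        - split. lra. rewrite Hrec. fold f0. unfold Rdiv. lra.
        - destruct IHn as [I1 I2].
          assert (Hle : X (S n) <= X 0%nat).
          { assert ((X n - w) * / f0 <= X n - w). { assert (/ f0 < 1). { rewrite <- Rinv_1. apply Rinv_lt_contravar; lra. }
              specialize (Hxw n). nra. } lra. }
          split; auto. rewrite (Hrec (S n)). unfold Rdiv.
          assert (/ (fL + sg*(X (S n) - L)) <= / f0) by (apply Rinv_le_contravar; [lra| unfold f0; nra]).
          specialize (Hxw (S n)). nra. }
      pose proof (decay X w f0 H1 (fun n => proj2 (Hdec n))) as D.
      destruct (small_pow f0 ((L - w) / (X 0%nat - w)) H1) as [n Hn].
      { apply Rdiv_lt_0_compat; auto. lra. }
      specialize (D n). destruct (HX n).
      assert ((X 0%nat - w) * (/ f0) ^ n < L - w).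
      { apply (Rmult_lt_compat_l (X 0%nat - w)) in Hn; auto. replace ((X 0%nat - w) * ((L - w) / (X 0%nat - w))) with (L - w) in Hn by (field; specialize (Hxw 0%nat); lra). lra. }
      lra.
Qed.

Section Track.
Variable p : nat.
Hypothesis hp : (3 <= p)%nat.
Let lp := lam_pos p hp.
Let l1 := lam_ge1 p hp.
Notation lm := (lam p).
Notation ee := (ee p).

Lemma act_step_pt x z : z < IZR (rdigit p x) * lm ->
  act (stepM p (Some x)) (Some z) = Some (1 / (IZR (rdigit p x) * lm - z)).
Proof. intros H. apply act_some_eq; simpl. lra. field. lra. Qed.

Lemma rdigit_ge2 x : lm <= x -> (2 <= rdigit p x)%Z.
Proof.
  intros H. pose proof (rdigit_bounds p hp x). destruct H0.
  assert (1 < IZR (rdigit p x)) by nra. apply lt_IZR in H2. lia.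
Qed.

Variable b : R.
Hypothesis hb : lm <= b.

Lemma track n : forall z, 0 <= z <= lm ->
  exists z' j, act (Phi p n (Some b)) (Some z) = Some z' /\ 0 <= z' /\ (2 <= j <= p - 1)%nat /\
   z' <= ee j /\ ee j <= rho_iter p n b /\
   (z' < ee j \/ (z' = rho_iter p n lm /\ forall i, (i < n)%nat -> cf_digit p b i = cf_digit p lm i)).
Proof.
  intros z Hz. induction n.
  - exists z, (p - 1)%nat. simpl. rewrite act_id. rewrite (ee_pm1 p hp).
    split; auto. split. lra. split. lia. split. lra. split. auto.
    destruct (Rlt_le_dec z lm). left; auto. right. split. lra. intros; lia.
  - destruct IHn as [z' [j [H1 [H2 [H3 [H4 [H5 H6]]]]]]].
    set (x := rho_iter p n b) in *.
    assert (Hx := rdigit_bounds p hp x). set (r := rdigit p x) in *.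
    assert (Hjl : ee j <= lm) by (apply (ee_le_lam p hp); lia).
    assert (He2 : ee 2%nat = 1 / lm) by apply (ee_2 p hp).
    assert (Hee2 : ee 2%nat <= ee j) by (apply (ee_le p hp); lia).
    assert (Hlpos : 0 < 1 / lm) by (apply Rdiv_lt_0_compat; lra).
    simpl Phi. rewrite act_mul by (rewrite det_Phi; lra). rewrite H1, iterP_some. fold x.
    assert (Hz'r : z' < IZR r * lm) by lra.
    rewrite act_step_pt by auto. fold r.
    assert (Hrho : rho_iter p (S n) b = 1 / (IZR r * lm - x)) by reflexivity.
    destruct (Rle_lt_dec lm x) as [Hxl|Hxl].
    + assert (Hr2 := rdigit_ge2 x Hxl). fold r in Hr2. apply IZR_le in Hr2.
      assert (Hd : lm <= IZR r * lm - z') by nra.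
      exists (1 / (IZR r * lm - z')), 2%nat. split; auto.
      assert (Hup : 1 / (IZR r * lm - z') <= 1 / lm) by (apply Rmult_le_compat_l; [lra| apply Rinv_le_contravar; lra]).
      split. left; apply Rdiv_lt_0_compat; lra. split. lia. split. lra. split.
      { rewrite He2, Hrho. apply Rmult_le_compat_l. lra. apply Rinv_le_contravar; lra. }
      destruct H6 as [H6|[H6 H7]].
      * left. rewrite He2. apply Rmult_lt_compat_l. lra. apply Rinv_lt_contravar; nra.
      * destruct (iter_lam_range p hp n) as [[R1 R2] _].
        destruct (Rlt_le_dec (rho_iter p n lm) lm) as [Hl|Hl].
        -- left. rewrite He2. apply Rmult_lt_compat_l. lra. apply Rinv_lt_contravar; nra.
        -- assert (Hl' : rho_iter p n lm = lm) by lra.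
           destruct (Req_dec (IZR r) 2) as [Hr|Hr].
           ++ right. split.
              ** simpl rho_iter. rewrite Hl'. unfold rho. rewrite (rdigit_2 p hp). rewrite H6, Hl', Hr. reflexivity.
              ** intros i Hi. destruct (Nat.eq_dec i n). subst i. unfold cf_digit. fold x. fold r.
                 rewrite Hl', (rdigit_2 p hp). apply eq_IZR. auto. apply H7; lia.
           ++ left. assert (3 <= IZR r). { assert (2 < IZR r) by lra. apply lt_IZR in H. apply IZR_le. lia. }
              rewrite He2. apply Rmult_lt_compat_l. lra. apply Rinv_lt_contravar; nra.
    + assert (Hjp : (j <= p - 2)%nat).
      { destruct (Nat.eq_dec j (p - 1)). subst j. rewrite (ee_pm1 p hp) in H5. lra. lia. }
      assert (Hx0 : 0 <= x) by lra.
      assert (Hr1 : r = 1%Z) by (apply (rdigit_1 p hp); lra).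
      rewrite Hr1 in *. simpl IZR in *. rewrite Rmult_1_l in *.
      destruct (ee_rec p hp j ltac:(lia)) as [A1 A2].
      exists (1 / (lm - z')), (S j). split; auto.
      split. left; apply Rdiv_lt_0_compat; lra. split. lia. split.
      { rewrite A2. apply Rmult_le_compat_l. lra. apply Rinv_le_contravar; lra. }
      split. { rewrite A2, Hrho. apply Rmult_le_compat_l. lra. apply Rinv_le_contravar; lra. }
      destruct H6 as [H6|[H6 H7]].
      * left. rewrite A2. apply Rmult_lt_compat_l. lra. apply Rinv_lt_contravar; nra.
      * right. destruct (iter_lam_range p hp n) as [[R1 R2] _].
        assert (Hdl : rdigit p (rho_iter p n lm) = 1%Z) by (apply (rdigit_1 p hp); lra).
        split.
        -- simpl rho_iter. rewrite (rho_1 p hp) by lra. rewrite H6. reflexivity.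
        -- intros i Hi. destruct (Nat.eq_dec i n). subst i. unfold cf_digit. fold x. fold r.
           rewrite Hdl. auto. apply H7; lia.
Qed.

End Track.

Section Core.
Variable p : nat.
Hypothesis hp : (3 <= p)%nat.
Let lp := lam_pos p hp.
Let l1 := lam_ge1 p hp.
Notation lm := (lam p).
Notation ee := (ee p).

Lemma periodic_mult x k : (forall j, cf_digit p x (j + k) = cf_digit p x j) ->
  forall n j, cf_digit p x (j + n * k) = cf_digit p x j.
Proof.
  intros H n. induction n; intros j. simpl. f_equal; lia.
  replace (j + S n * k)%nat with ((j + n * k) + k)%nat by lia. rewrite H. auto.
Qed.

Lemma agree_special b k : (1 <= k)%nat -> (forall j, cf_digit p b (j + k) = cf_digit p b j) ->
  (k mod (p - 2) = 0)%nat -> (forall i, (i < k)%nat -> cf_digit p b i = cf_digit p lm i) ->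
  special_period p b.
Proof.
  intros Hk Hper Hmod Hag. exists 0%nat. split. lia.
  assert (forall j, cf_digit p b j = cf_digit p lm j).
  { intro j. induction j as [j IH] using (well_founded_induction lt_wf).
    destruct (Nat.lt_ge_cases j k). auto.
    replace j with ((j - k) + k)%nat by lia. rewrite Hper. rewrite IH by lia.
    rewrite !(digit_lam p hp). 
    apply Nat.Div0.mod_divides in Hmod. destruct Hmod as [q Hq]. rewrite Hq.
    rewrite (Nat.mul_comm (p-2) q), Nat.Div0.mod_add. auto. }
  intros j. rewrite H, (digit_lam p hp). auto.
Qed.

Lemma sign_lemma (c d L : R) : 0 < L -> (forall z, 0 <= z <= L -> c * z + d <> 0) ->
  forall z1 z2, 0 <= z1 <= L -> 0 <= z2 <= L -> 0 < (c * z1 + d) * (c * z2 + d).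
Proof.
  intros HL Hnz z1 z2 H1 H2.
  assert (A := Hnz z1 H1). assert (B := Hnz z2 H2).
  destruct (Rlt_le_dec 0 ((c * z1 + d) * (c * z2 + d))) as [Hp|Hn]; auto. exfalso.
  set (A0 := c * z1 + d) in *. set (B0 := c * z2 + d) in *.
  assert (HAB : A0 * B0 < 0). { destruct Hn; auto. apply Rmult_integral in H. tauto. }
  assert (HBA : B0 - A0 <> 0) by nra.
  set (t := B0 / (B0 - A0)).
  assert (Ht : 0 < t < 1).
  { unfold t. destruct (Rlt_le_dec 0 B0).
    - assert (A0 < 0) by nra. split. apply Rdiv_lt_0_compat; lra.
      apply (Rmult_lt_reg_r (B0 - A0)). lra. replace (B0 / (B0 - A0) * (B0 - A0)) with B0 by (field; lra). lra.
    - assert (B0 < 0) by (destruct r; auto; subst; lra). assert (0 < A0) by nra.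
      split. replace (B0 / (B0 - A0)) with ((- B0) / (A0 - B0)) by (field; lra). apply Rdiv_lt_0_compat; lra.
      replace (B0 / (B0 - A0)) with ((- B0) / (A0 - B0)) by (field; lra).
      apply (Rmult_lt_reg_r (A0 - B0)). lra. replace (- B0 / (A0 - B0) * (A0 - B0)) with (- B0) by (field; lra). lra. }
  set (z0 := t * z1 + (1 - t) * z2).
  apply (Hnz z0). unfold z0. split; nra.
  replace (c * z0 + d) with (t * A0 + (1 - t) * B0) by (unfold z0, A0, B0; ring).
  unfold t. field. exact HBA.
Qed.

Lemma core b k : lm <= b -> (1 <= k)%nat -> (forall j, cf_digit p b (j + k) = cf_digit p b j) ->
  ~ special_period p b -> rho_iter p k b = b.
Proof.
intros hb hk Hper Hns.
destruct (Phi p k (Some b)) as [a bb c d] eqn:HD.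
assert (Hdet : a * d - bb * c = 1) by (pose proof (det_Phi p k (Some b)) as H; rewrite HD in H; unfold mdet in H; simpl in H; lra).
set (Dz := fun z => (a * z + bb) / (c * z + d)).
assert (F1 : forall z, 0 <= z <= lm -> c * z + d <> 0 /\ 0 <= Dz z <= lm).
{ intros z Hz. destruct (track p hp b hb k z Hz) as [z' [j [T1 [T2 [T3 [T4 [T5 T6]]]]]]].
  rewrite HD in T1. apply act_some_inv in T1. destruct T1 as [T1a T1b]. simpl in *.
  split; auto. unfold Dz. rewrite <- T1b. split; auto. pose proof (ee_le_lam p hp j ltac:(lia)). lra. }
assert (F2 : Dz lm < lm).
{ destruct (track p hp b hb k lm ltac:(lra)) as [z' [j [T1 [T2 [T3 [T4 [T5 T6]]]]]]].
  rewrite HD in T1. apply act_some_inv in T1. destruct T1 as [T1a T1b]. simpl in *.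
  unfold Dz. rewrite <- T1b. pose proof (ee_le_lam p hp j ltac:(lia)).
  destruct T6 as [T6|[T6 T7]]. lra.
  destruct (iter_lam_range p hp k) as [[R1 R2] R3].
  destruct (Rlt_le_dec z' lm). auto. exfalso. apply Hns.
  apply (agree_special b k); auto. apply R3. lra. }
assert (Hnz : forall z, 0 <= z <= lm -> c * z + d <> 0) by (intros; apply F1; auto).
pose proof (sign_lemma c d lm lp Hnz) as SG.
assert (F4 : exists w, 0 <= w < lm /\ Dz w = w).
{ set (g := fun z => a * z + bb - z * (c * z + d)).
  assert (Hg : forall z, 0 <= z <= lm -> g z = (c * z + d) * (Dz z - z)).
  { intros z Hz. unfold g, Dz. field. apply Hnz; auto. }
  assert (Hcont : continuity g) by (unfold g; reg).
  assert (Hd0 := SG 0 lm ltac:(lra) ltac:(lra)).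
  destruct (F1 0 ltac:(lra)) as [_ H0].
  assert (gl : g lm = (c * lm + d) * (Dz lm - lm)) by (apply Hg; lra).
  assert (g0 : g 0 = (c * 0 + d) * (Dz 0 - 0)) by (apply Hg; lra).
  destruct (Rlt_le_dec 0 (c * 0 + d)) as [Hdp|Hdn].
  - assert (Hlp : 0 < c * lm + d) by nra.
    destruct (Req_dec (g 0) 0) as [Hz|Hz].
    + exists 0. split. lra. assert (Dz 0 - 0 = 0). { rewrite g0 in Hz. apply Rmult_integral in Hz. destruct Hz; auto; lra. } lra.
    + assert (HD0 : 0 < Dz 0). { destruct H0 as [[H0|H0] _]; auto. exfalso; apply Hz; rewrite g0, <- H0; ring. }
      destruct (IVT (fun z => - g z) 0 lm) as [w [Hw1 Hw2]]; [apply continuity_opp; auto | lra | rewrite g0; nra | rewrite gl; nra | ].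
      * exists w. assert (Hwl : w <> lm). { intro; subst. rewrite gl in Hw2. nra. }
        split. lra. assert (g w = 0) by lra. rewrite Hg in H by lra. apply Rmult_integral in H. destruct H. exfalso; apply (Hnz w); auto; lra. lra.
  - assert (Hdn' : c * 0 + d < 0) by (destruct Hdn; auto; exfalso; apply (Hnz 0); lra).
    assert (Hln : c * lm + d < 0) by nra.
    destruct (Req_dec (g 0) 0) as [Hz|Hz].
    + exists 0. split. lra. assert (Dz 0 - 0 = 0). { rewrite g0 in Hz. apply Rmult_integral in Hz. destruct Hz; auto; lra. } lra.
    + assert (HD0 : 0 < Dz 0). { destruct H0 as [[H0|H0] _]; auto. exfalso; apply Hz; rewrite g0, <- H0; ring. }
      destruct (IVT g 0 lm) as [w [Hw1 Hw2]]; [auto | lra | rewrite g0; nra | rewrite gl; nra | ].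
      * exists w. assert (Hwl : w <> lm). { intro; subst. rewrite gl in Hw2. nra. }
        split. lra. rewrite Hg in Hw2 by lra. apply Rmult_integral in Hw2. destruct Hw2. exfalso; apply (Hnz w); auto; lra. lra. }
destruct F4 as [w [Hw Hfix]].
set (X := fun n => rho_iter p (n * k) b).
assert (HXd : forall n j, cf_digit p (X n) j = cf_digit p b j).
{ intros n j. unfold X. rewrite <- cf_digit_shift. apply periodic_mult; auto. }
assert (HXD : forall n, c * X n + d <> 0 /\ X (S n) = Dz (X n)).
{ intros n. assert (Phi p k (Some (X n)) = Phi p k (Some b)) by (apply Phi_digits; auto).
  pose proof (act_Phi p hp k (Some (X n))) as H0. rewrite H, HD, iterP_some in H0.
  apply act_some_inv in H0. destruct H0 as [H0 H1]. simpl in *. split; auto.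
  unfold X. simpl. rewrite rho_iter_add. fold (X n). rewrite H1. reflexivity. }
set (d0 := rdigit p b).
assert (HXb : forall n, lm <= X n < IZR d0 * lm).
{ intro n. pose proof (rdigit_bounds p hp (X n)) as H.
  assert (H0 : rdigit p (X n) = d0). { pose proof (HXd n 0%nat) as H0. unfold cf_digit in H0. simpl in H0. auto. }
  rewrite H0 in H. pose proof (rdigit_ge2 p hp b hb) as H1. fold d0 in H1. apply IZR_le in H1. split; nra. }
assert (Hid : forall z, c * z + d <> 0 -> Dz z - w = (z - w) / ((c * z + d) * (c * w + d))).
{ intros z Hz. assert (Hw' : c * w + d <> 0) by (apply Hnz; lra).
  assert (E1: (a * z + bb) / (c * z + d) - (a * w + bb) / (c * w + d) = (a*d - bb*c) * (z - w) / ((c * z + d) * (c * w + d))) by (field; split; auto).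
  rewrite Hdet in E1. assert (Hf' : (a*w+bb)/(c*w+d) = w) by exact Hfix.
  unfold Dz. rewrite Hf' in E1. rewrite E1. field. split; auto. }
assert (Hphiw : 0 < (c * lm + d) * (c * w + d)) by (apply SG; lra).
assert (HfL : 1 < (c * lm + d) * (c * w + d)).
{ pose proof (Hid lm (Hnz lm ltac:(lra))) as H.
  assert (H0 : (lm - w) / ((c * lm + d) * (c * w + d)) < lm - w) by lra.
  apply (Rmult_lt_compat_r ((c * lm + d) * (c * w + d))) in H0; auto.
  replace ((lm - w) / ((c * lm + d) * (c * w + d)) * ((c * lm + d) * (c * w + d))) with (lm - w) in H0 by (field; repeat split; intro Hc; nra).
  nra. }
assert (Hrec : forall n, X (S n) - w = (X n - w) / ((c * lm + d) * (c * w + d) + (c * (c * w + d)) * (X n - lm))).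
{ intro n. destruct (HXD n) as [H1 H2]. rewrite H2, Hid; auto. f_equal. ring. }
assert (Hpos : forall n, 0 < (c * lm + d) * (c * w + d) + (c * (c * w + d)) * (X n - lm)).
{ intro n. replace ((c * lm + d) * (c * w + d) + (c * (c * w + d)) * (X n - lm)) with ((c * X n + d) * (c * w + d)) by ring.
  pose proof (Hrec n) as H. destruct (HXb n), (HXb (S n)).
  replace ((c * lm + d) * (c * w + d) + (c * (c * w + d)) * (X n - lm)) with ((c * X n + d) * (c * w + d)) in H by ring.
  destruct (Rlt_le_dec 0 ((c * X n + d) * (c * w + d))) as [r|r]; auto. exfalso.
  destruct r as [r|r].
  - assert ((X n - w) / ((c * X n + d) * (c * w + d)) < 0). { unfold Rdiv. apply Rmult_pos_neg. lra. apply Rinv_lt_0_compat; auto. } lra.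
  - apply Rmult_integral in r. destruct r as [r|r]. apply (proj1 (HXD n)); auto. apply (Hnz w); auto; lra. }
pose proof (phi_arg X w lm (IZR d0 * lm) _ _ ltac:(lra) HfL HXb Hpos Hrec) as HX1.
unfold X in HX1. simpl in HX1. rewrite Nat.add_0_r in HX1. auto.
Qed.

End Core.

Lemma mod_shift_c i c m : (c < m)%nat -> ((i + c) mod m = c <-> i mod m = 0)%nat.
Proof.
  intros Hc. assert (Hm : m <> 0%nat) by lia.
  rewrite (Nat.div_mod_eq i m) at 1.
  replace (m * (i / m) + i mod m + c)%nat with ((i mod m + c) + (i / m) * m)%nat by lia.
  rewrite Nat.Div0.mod_add.
  pose proof (Nat.mod_upper_bound i m Hm).
  pose proof (Nat.div_mod_eq (i mod m + c) m).
  pose proof (Nat.mod_upper_bound (i mod m + c) m Hm).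
  split; intros H2.
  - rewrite H2 in H0. assert (i mod m = m * ((i mod m + c) / m))%nat by lia.
    destruct ((i mod m + c) / m)%nat. lia. nia.
  - rewrite H2. simpl. apply Nat.mod_small; auto.
Qed.

Lemma mod_succ_iff i c m : (c < m)%nat -> (i mod m = c <-> (i + 1) mod m = (c + 1) mod m)%nat.
Proof.
  intros Hc. assert (Hm : m <> 0%nat) by lia.
  rewrite (Nat.Div0.add_mod i 1 m). pose proof (Nat.mod_upper_bound i m Hm).
  destruct (Nat.eq_dec m 1). subst. split; intros; [|lia]. rewrite !Nat.mod_1_r; auto.
  rewrite (Nat.mod_small 1 m) by lia.
  split; intros H1. rewrite H1; auto.
  assert (forall x, (x < m)%nat -> ((x + 1) mod m = if Nat.eqb (x + 1) m then 0 else x + 1)%nat).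
  { intros x Hx. destruct (Nat.eqb_spec (x+1) m). rewrite e. apply Nat.Div0.mod_same. apply Nat.mod_small; lia. }
  rewrite (H0 (i mod m)) in H1 by auto. rewrite (H0 c) in H1 by auto.
  destruct (Nat.eqb_spec (i mod m + 1) m), (Nat.eqb_spec (c + 1) m); lia.
Qed.

Section Main.
Variable p : nat.
Hypothesis hp : (3 <= p)%nat.
Let lp := lam_pos p hp.
Let l1 := lam_ge1 p hp.
Notation lm := (lam p).
Notation ee := (ee p).

Definition spd (c j : nat) : Z := (if Nat.eqb (j mod (p - 2)) c then 2 else 1)%Z.

Lemma cf_digit_rho x j : cf_digit p (rho p x) j = cf_digit p x (S j).
Proof. replace (S j) with (j + 1)%nat by lia. rewrite cf_digit_shift. reflexivity. Qed.

Lemma reduced_rho b : Gp_reduced p b -> Gp_reduced p (rho p b).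
Proof.
  intros [[k [Hk Hper]] Hns]. split.
  - exists k. split; auto. intros j. rewrite !cf_digit_rho. replace (S (j + k)) with (S j + k)%nat by lia. apply Hper.
  - intros [c [Hc Hsp]]. apply Hns. set (m := (p - 2)%nat) in *.
    assert (Hsp' : forall j, cf_digit p b (S j) = spd c j) by (intro j; rewrite <- cf_digit_rho; apply Hsp).
    assert (Hkm : (k mod m = 0)%nat).
    { pose proof (Hsp' (c + k)%nat) as H1. replace (S (c + k)) with (S c + k)%nat in H1 by lia.
      rewrite Hper, Hsp' in H1. unfold spd in H1. fold m in H1. rewrite (Nat.mod_small c m) in H1 by lia.
      rewrite Nat.eqb_refl in H1. destruct (Nat.eqb_spec ((c + k) mod m) c) as [e|e]; [|discriminate].
      rewrite Nat.add_comm in e. apply mod_shift_c in e; auto. }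
    exists ((c + 1) mod m)%nat. split. apply Nat.mod_upper_bound; lia.
    intros j. destruct j.
    + pose proof (Hper 0%nat) as H0. simpl in H0. rewrite <- H0.
      replace k with (S (k - 1)) by lia. rewrite Hsp'. unfold spd. fold m.
      assert (E1 := mod_succ_iff (k - 1) c m Hc). replace (k - 1 + 1)%nat with k in E1 by lia.
      rewrite Hkm in E1. rewrite Nat.Div0.mod_0_l.
      destruct (Nat.eqb_spec ((k - 1) mod m) c), (Nat.eqb_spec 0 ((c + 1) mod m)); auto; exfalso; tauto.
    + rewrite Hsp'. unfold spd. fold m.
      assert (E1 := mod_succ_iff j c m Hc). replace (j + 1)%nat with (S j) in E1 by lia.
      destruct (Nat.eqb_spec (j mod m) c), (Nat.eqb_spec (S j mod m) ((c + 1) mod m)); auto; exfalso; tauto.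
Qed.

Lemma reduced_iter n b : Gp_reduced p b -> Gp_reduced p (rho_iter p n b).
Proof. induction n; simpl; auto. intros; apply reduced_rho; auto. Qed.

Lemma exists_big_digit b : exists s, (1 <= s <= p - 2)%nat /\ (2 <= cf_digit p b s)%Z.
Proof.
  destruct (classic (exists s, (1 <= s <= p - 2)%nat /\ (2 <= cf_digit p b s)%Z)) as [H|H]; auto.
  exfalso.
  assert (Hone : forall s, (1 <= s <= p - 2)%nat -> cf_digit p b s = 1%Z).
  { intros s Hs. pose proof (digit_ge1 p hp b s ltac:(lia)).
    destruct (Z.eq_dec (cf_digit p b s) 1); auto. exfalso. apply H. exists s. split; auto. lia. }
  assert (Hgrow : forall n, (1 <= n <= p - 2)%nat -> ee (S n) <= rho_iter p n b).
  { intros n Hn. induction n. lia. destruct (Nat.eq_dec n 0).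
    - subst. simpl. rewrite (ee_2 p hp). pose proof (rho_ge p hp b). unfold Rdiv. lra.
    - specialize (IHn ltac:(lia)). simpl rho_iter.
      assert (Hd : rdigit p (rho_iter p n b) = 1%Z) by (apply Hone; lia).
      pose proof (rdigit_bounds p hp (rho_iter p n b)) as B. rewrite Hd in B. simpl IZR in B.
      assert (Hn0 : ee 1 <= ee (S n)) by (apply (ee_le p hp); lia). rewrite (ee_1 p) in Hn0.
      rewrite (rho_1 p hp) by lra.
      destruct (ee_rec p hp (S n) ltac:(lia)) as [A1 A2]. rewrite A2.
      apply Rmult_le_compat_l. lra. apply Rinv_le_contravar; lra. }
  specialize (Hgrow (p - 2)%nat ltac:(lia)). replace (S (p - 2)) with (p - 1)%nat in Hgrow by lia.
  rewrite (ee_pm1 p hp) in Hgrow. specialize (Hone (p - 2)%nat ltac:(lia)).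
  pose proof (rdigit_ge2 p hp _ Hgrow). unfold cf_digit in Hone. lia.
Qed.

Lemma period b : Gp_reduced p b -> exists m, (1 <= m)%nat /\ rho_iter p m b = b.
Proof.
  intros Hred. pose proof Hred as [[k [Hk Hper]] Hns]. exists k. split; auto.
  destruct (exists_big_digit b) as [s [Hs Hd]].
  set (b' := rho_iter p s b).
  assert (Hb' : lm <= b') by (apply (digit2_ge p hp); auto).
  assert (Hb'k : rho_iter p k b' = b').
  { apply (core p hp b' k); auto.
    - intros j. unfold b'. rewrite <- !cf_digit_shift. replace (j + k + s)%nat with ((j + s) + k)%nat by lia. apply Hper.
    - apply (reduced_iter s b Hred). }
  assert (H1 : rho_iter p s (rho_iter p k b) = rho_iter p s b).
  { rewrite <- rho_iter_add, Nat.add_comm, rho_iter_add. auto. }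
  assert (Hdig : forall j, (j < s)%nat -> cf_digit p (rho_iter p k b) j = cf_digit p b j).
  { intros j _. rewrite <- cf_digit_shift. apply Hper. }
  pose proof (Phi_digits p hp s _ _ Hdig) as HPhi.
  pose proof (act_Phi p hp s (Some (rho_iter p k b))) as A1.
  pose proof (act_Phi p hp s (Some b)) as A2.
  rewrite iterP_some in A1, A2. rewrite HPhi in A1. rewrite H1 in A1.
  apply (act_inj (Phi p s (Some b)) _ _ (rho_iter p s b)); auto. rewrite det_Phi; lra.
Qed.

End Main.

Lemma trace_adj_conj A Y : trace (mmul (madj A) (mmul Y A)) = mdet A * trace Y.
Proof. destruct A, Y; unfold trace, mmul, madj, mdet; simpl; ring. Qed.

Lemma trace_scale k Y : trace (mscale k Y) = k * trace Y.
Proof. destruct Y; unfold trace, mscale; simpl; ring. Qed.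

Lemma trace_conj A M X k : mdet A = 1 -> mmul A M = mscale k (mmul X A) -> trace M = k * trace X.
Proof.
  intros Hd H. assert (HM : M = mmul (madj A) (mmul A M)).
  { rewrite mmul_assoc, madj_l, Hd, mscale_1, mmul_id_l. auto. }
  rewrite HM, H, mmul_scale_r, trace_scale, trace_adj_conj, Hd. ring.
Qed.

Lemma trace_adj X : trace (madj X) = trace X.
Proof. destruct X; unfold trace, madj; simpl; ring. Qed.

Lemma trace_conj2 B M X k : mdet B = 1 -> mdet X = 1 -> mmul (mmul X B) M = mscale k B -> trace M = k * trace X.
Proof.
  intros HB HX H. rewrite <- (trace_adj X). apply (trace_conj B); auto.
  replace (mmul B M) with (mmul (madj X) (mmul (mmul X B) M)).
  rewrite H, mmul_scale_r. auto.
  rewrite !mmul_assoc, madj_l, HX, mscale_1, mmul_id_l. auto.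
Qed.

Lemma iter_period p l g : rho_iter p l g = g -> forall t, rho_iter p (t * l) g = g.
Proof. intros H t. induction t; simpl; auto. rewrite rho_iter_add, IHt. auto. Qed.

Section Final.
Variable p : nat.
Hypothesis hp : (3 <= p)%nat.
Let lp := lam_pos p hp.
Let l1 := lam_ge1 p hp.
Notation lm := (lam p).

Lemma ML_points V x y : inGp p V -> act V (Some x) = Some y ->
  exists m n, rho_iter p m y = rho_iter p n x.
Proof.
  intros HV Hxy. destruct (ML_Gp p hp V (Some x) HV) as [m [n [s [Hs H]]]].
  pose proof (ML_iter p hp V (Some x) m n s) as I. rewrite Hxy in H, I.
  specialize (I ltac:(rewrite (inGp_det p V HV); lra) Hs H).
  rewrite !iterP_some in I. inversion I. eauto.
Qed.

Lemma part3 b g V : Gp_reduced p b -> Gp_reduced p g -> inGp p V -> maps_to V b g ->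
  exists n, g = rho_iter p n b.
Proof.
  intros Hb Hg HV Hm. apply maps_to_act in Hm.
  destruct (ML_points V b g HV Hm) as [m [n H]].
  destruct (period p hp g Hg) as [l [Hl Hgl]].
  exists (m * l - m + n)%nat. rewrite rho_iter_add, <- H, <- rho_iter_add.
  replace (m * l - m + m)%nat with (m * l)%nat by nia. symmetry. apply iter_period; auto.
Qed.

Lemma det_Uq q : mdet (Uq p q) = 1.
Proof. unfold mdet, Uq; simpl; ring. Qed.

Lemma abs_two k : sgn k -> Rabs (k * 2) > 2 -> False.
Proof. intros [-> | ->] H. rewrite Rmult_1_l, Rabs_right in H; lra. replace (-1 * 2) with (-2) in H by ring. rewrite Rabs_left in H; lra. Qed.

Lemma Phi_shift a m n t M s : rho_iter p m a = rho_iter p n a ->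
  mmul (Phi p m (Some a)) M = mscale s (Phi p n (Some a)) ->
  mmul (Phi p (t + m) (Some a)) M = mscale s (Phi p (t + n) (Some a)).
Proof.
  intros Hi H. rewrite !Phi_add, !iterP_some, Hi, <- mmul_assoc, H, mmul_scale_r. auto.
Qed.

Lemma part1 a : hyperbolic_fixed_point p a -> exists n, Gp_reduced p (rho_iter p n a).
Proof.
  intros [M [HM [Htr Hfix]]]. apply maps_to_act in Hfix.
  destruct (ML_Gp p hp M (Some a) HM) as [m [n [s [Hs H]]]]. rewrite Hfix in H.
  assert (Hit : rho_iter p m a = rho_iter p n a).
  { pose proof (ML_iter p hp M (Some a) m n s) as I. rewrite Hfix in I.
    specialize (I ltac:(rewrite (inGp_det p M HM); lra) Hs H). rewrite !iterP_some in I. inversion I; auto. }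
  destruct (Nat.eq_dec m n) as [Emn|Nmn].
  { subst. exfalso. apply (abs_two s Hs). replace 2 with (trace mid) by (unfold trace, mid; simpl; ring).
    rewrite <- (trace_conj (Phi p n (Some a)) M mid s); auto. apply det_Phi. rewrite mmul_id_l. auto. }
  assert (NL : forall t, rho_iter p t a <> lm).
  { intros t Ht.
    set (t' := (t + (p - 2) * m - m)%nat).
    pose proof (Phi_shift a m n t' M s Hit H) as H'.
    assert (Hm' : rho_iter p (t' + m) a = lm).
    { replace (t' + m)%nat with ((p - 2) * m + t)%nat by (unfold t'; nia).
      rewrite rho_iter_add, Ht, Nat.mul_comm. apply (iter_lam_mult p hp). }
    assert (Hn' : rho_iter p (t' + n) a = lm).
    { rewrite rho_iter_add, <- Hit, <- rho_iter_add. auto. }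
    destruct (Nat.lt_ge_cases m n) as [Hlt|Hge].
    - replace (t' + n)%nat with ((n - m) + (t' + m))%nat in H', Hn' by lia.
      rewrite rho_iter_add, Hm' in Hn'.
      destruct (iter_lam_range p hp (n - m)) as [_ R]. apply R in Hn'.
      apply Nat.Div0.mod_divides in Hn'. destruct Hn' as [q Hq].
      destruct (Phi_cycle_q p hp q) as [sg [Hsg Hc]].
      rewrite (Phi_add p (n - m) (t' + m)), iterP_some, Hm', Hq, Nat.mul_comm, Hc in H'.
      assert (HtM : trace M = (s * sg) * trace (Uq p (INR q))).
      { apply (trace_conj (Phi p (t' + m) (Some a))). apply det_Phi.
        rewrite H', mmul_scale_l, mscale_scale. auto. }
      rewrite tr_Uq in HtM. rewrite HtM in Htr. exact (abs_two _ (sgn_mul _ _ Hs Hsg) Htr).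
    - assert (Hgt : (n < m)%nat) by lia.
      replace (t' + m)%nat with ((m - n) + (t' + n))%nat in H', Hm' by lia.
      rewrite rho_iter_add, Hn' in Hm'.
      destruct (iter_lam_range p hp (m - n)) as [_ R]. apply R in Hm'.
      apply Nat.Div0.mod_divides in Hm'. destruct Hm' as [q Hq].
      destruct (Phi_cycle_q p hp q) as [sg [Hsg Hc]].
      rewrite Phi_add, iterP_some, Hn', Hq, Nat.mul_comm, Hc in H'.
      assert (HtM : trace M = s * trace (mscale sg (Uq p (INR q)))).
      { apply (trace_conj2 (Phi p (t' + n) (Some a))). apply det_Phi.
        unfold mdet, mscale, Uq; simpl. destruct Hsg as [-> | ->]; ring.
        rewrite <- H'. rewrite mmul_scale_l. auto. }
      rewrite trace_scale, tr_Uq, <- Rmult_assoc in HtM. rewrite HtM in Htr. exact (abs_two _ (sgn_mul _ _ Hs Hsg) Htr). }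
  set (lo := Nat.min m n). set (k := (Nat.max m n - Nat.min m n)%nat).
  assert (Hk : (1 <= k)%nat) by (unfold k; lia).
  assert (Hcyc : rho_iter p k (rho_iter p lo a) = rho_iter p lo a).
  { rewrite <- rho_iter_add. unfold k, lo. destruct (Nat.le_ge_cases m n).
    - rewrite Nat.min_l, Nat.max_r by auto. replace (n - m + m)%nat with n by lia. auto.
    - rewrite Nat.min_r, Nat.max_l by auto. replace (m - n + n)%nat with m by lia. auto. }
  exists lo. split.
  - exists k. split; auto. intros j. unfold cf_digit. rewrite rho_iter_add, Hcyc. auto.
  - intros [c [Hc Hsp]].
    set (b' := rho_iter p c (rho_iter p lo a)).
    assert (Hd : forall j, cf_digit p b' j = cf_digit p lm j).
    { intros j. unfold b'. rewrite <- cf_digit_shift, Hsp, (digit_lam p hp).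
      destruct (Nat.eqb_spec ((j + c) mod (p - 2)) c) as [e|e], (Nat.eqb_spec (j mod (p - 2)) 0) as [f|f]; auto.
      - apply mod_shift_c in e; auto. contradiction.
      - apply (mod_shift_c j c) in f; auto. contradiction. }
    assert (Hb'k : rho_iter p k b' = b').
    { unfold b'. rewrite <- rho_iter_add, Nat.add_comm, rho_iter_add, Hcyc. auto. }
    assert (HK : rho_iter p (k * (p - 2)) b' = b').
    { rewrite Nat.mul_comm. apply iter_period; auto. }
    assert (HP : Phi p (k * (p - 2)) (Some b') = Phi p (k * (p - 2)) (Some lm)) by (apply Phi_digits; auto).
    destruct (Phi_cycle_q p hp k) as [sg [Hsg Hc2]].
    pose proof (act_Phi p hp (k * (p - 2)) (Some b')) as A. rewrite iterP_some, HK, HP, Hc2 in A.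
    apply (Uq_fix p hp (INR k) sg b') in A; auto.
    2: { apply lt_0_INR; lia. }
    apply (NL (c + lo)%nat). rewrite rho_iter_add. auto.
Qed.

Lemma inGp_mul A B : inGp p A -> inGp p B -> inGp p (mmul A B).
Proof.
  intros HA HB. induction HA.
  - rewrite mmul_id_l; auto.
  - rewrite <- mmul_assoc. constructor; auto.
  - rewrite <- mmul_assoc. constructor; auto.
  - rewrite <- mmul_assoc. constructor; auto.
  - rewrite <- mmul_assoc. constructor; auto.
Qed.

Definition Spow (z : Z) := Mat2 1 (IZR z * lm) 0 1.

Lemma inGp_Spow_nat n : inGp p (Spow (Z.of_nat n)) /\ inGp p (Spow (- Z.of_nat n)).
Proof.
  induction n.
  - simpl. unfold Spow. replace (Mat2 1 (0 * lm) 0 1) with mid by (unfold mid; f_equal; ring).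
    split; constructor.
  - destruct IHn as [H1 H2]. split.
    + replace (Spow (Z.of_nat (S n))) with (mmul (Smat p) (Spow (Z.of_nat n))). constructor; auto.
      unfold Spow, mmul, Smat. rewrite Nat2Z.inj_succ, succ_IZR. simpl. f_equal; ring.
    + replace (Spow (- Z.of_nat (S n))) with (mmul (Sinv p) (Spow (- Z.of_nat n))). constructor; auto.
      unfold Spow, mmul, Sinv. rewrite Nat2Z.inj_succ, !opp_IZR, succ_IZR. simpl. f_equal; ring.
Qed.

Lemma inGp_Spow z : inGp p (Spow z).
Proof.
  destruct (Z.le_ge_cases 0 z).
  - rewrite <- (Z2Nat.id z) by auto. apply inGp_Spow_nat.
  - replace z with (- Z.of_nat (Z.to_nat (- z)))%Z by (rewrite Z2Nat.id; lia). apply inGp_Spow_nat.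
Qed.

Lemma inGp_Phi n x : inGp p (Phi p n (Some x)).
Proof.
  induction n; simpl. constructor. apply inGp_mul; auto.
  rewrite iterP_some. simpl.
  replace (Mat2 0 (-1) 1 (- (IZR (rdigit p (rho_iter p n x)) * lm))) with (mmul Tmat (Spow (- rdigit p (rho_iter p n x)))).
  apply inGp_mul. replace Tmat with (mmul Tmat mid) by (rewrite mmul_id_r; auto). constructor; constructor.
  apply inGp_Spow. unfold mmul, Tmat, Spow. rewrite opp_IZR. simpl. f_equal; ring.
Qed.

Lemma part5 a : hyperbolic_fixed_point p a ->
  exists b, Gp_reduced p b /\ Gp_equiv p a b /\
    forall g, Gp_reduced p g -> Gp_equiv p a g -> exists n, g = rho_iter p n b.
Proof.
  intros Ha. destruct (part1 a Ha) as [n0 Hred]. exists (rho_iter p n0 a). split; auto. split.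
  - exists (Phi p n0 (Some a)). split. apply inGp_Phi. apply act_some_inv.
    rewrite (act_Phi p hp), iterP_some. auto.
  - intros g Hg [W [HW Hm]]. apply maps_to_act in Hm.
    destruct (ML_points W a g HW Hm) as [m [n H]].
    destruct (period p hp g Hg) as [l [Hl Hgl]].
    set (t := (m + n0)%nat).
    exists (t * l - m + n - n0)%nat.
    rewrite <- rho_iter_add. replace (t * l - m + n - n0 + n0)%nat with ((t * l - m) + n)%nat by (unfold t; nia).
    rewrite rho_iter_add, <- H, <- rho_iter_add. replace (t * l - m + m)%nat with (t * l)%nat by (unfold t; nia).
    symmetry. apply iter_period; auto.
Qed.

End Final.

Theorem theorem5p1 (p : nat) (hp : (3 <= p)%nat) :
  (* (i) *)
  (forall a, hyperbolic_fixed_point p a ->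
     exists n : nat, Gp_reduced p (rho_iter p n a)) /\
  (* (ii) *)
  (forall b, Gp_reduced p b -> Gp_reduced p (rho p b)) /\
  (forall b, Gp_reduced p b -> exists m : nat, (1 <= m)%nat /\ rho_iter p m b = b) /\
  (* (iii) *)
  (forall b g V, Gp_reduced p b -> Gp_reduced p g -> inGp p V -> maps_to V b g ->
     exists n : nat, g = rho_iter p n b) /\
  (* consequence: each class of hyperbolic fixed points contains exactly one cycle *)
  (forall a, hyperbolic_fixed_point p a ->
     exists b, Gp_reduced p b /\ Gp_equiv p a b /\
       forall g, Gp_reduced p g -> Gp_equiv p a g -> exists n : nat, g = rho_iter p n b).
Proof.
  split. intros a Ha. exact (part1 p hp a Ha).
  split. intros b Hb. exact (reduced_rho p hp b Hb).
  split. intros b Hb. exact (period p hp b Hb).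
  split. intros b g V Hb Hg HV Hm. exact (part3 p hp b g V Hb Hg HV Hm).
  intros a Ha. exact (part5 p hp a Ha).
Qed.
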